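(* Consider the switched system described in the context. For any $(\mathbf{x}_0,j_0)\in\mathbb{R}^3_+\times\mathcal{S}$ there exists a unique solution $(\mathbf{X}(t),\xi(t))_{t\ge0}$ of $\frac{dX_i}{dt}(t)=X_i(t)f_i(\mathbf{X}(t),\xi(t))$, $i=1,2,3$, with $(\mathbf{X}(0),\xi(0))=(\mathbf{x}_0,j_0)$ (defined for all $t\ge0$). There exists a compact set $\mathcal{K}\subset\mathbb{R}^3_+$ such that every nonnegative solution eventually enters $\mathcal{K}$ and then remains there forever. Moreover, if $\mathbf{X}(0)=\mathbf{x}_0\in\mathbb{R}^{3,\circ}_+=(0,\infty)^3$, then with probability one $\mathbf{X}(t)\in\mathbb{R}^{3,\circ}_+$ for all $t\ge0$.
   Context: Let $r,d,b_1,b_2>0$ and, for $j\in\mathcal{S}=\{1,2\}$, let $c_1(j),c_2(j),e_1(j),e_2(j)>0$. Let $\xi(t)$ be a continuous-time Markov chain on $\mathcal{S}$ switching from $1$ to $2$ at rate $q_{12}>0$ and from $2$ to $1$ at rate $q_{21}>0$. For $\mathbf{x}=(x_1,x_2,x_3)$, $j\in\mathcal{S}$ put $f_1(\mathbf{x},j)=r-x_1-b_1x_2-c_1(j)x_3$, $f_2(\mathbf{x},j)=r-x_2-b_2x_1-c_2(j)x_3$, $f_3(\mathbf{x},j)=e_1(j)x_1+e_2(j)x_2-d$. *)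

(* Defs.v *)
From Stdlib Require Import Reals Lra.
From Coquelicot Require Import Coquelicot.
Open Scope R_scope.

Inductive state : Type := s1 | s2.

Inductive idx : Type := I1 | I2 | I3.
Definition vec3 := idx -> R.

Definition nonneg3 (x : vec3) : Prop := forall i, 0 <= x i.
Definition pos3 (x : vec3) : Prop := forall i, 0 < x i.

Definition fvec (r d b1 b2 : R) (c1 c2 e1 e2 : state -> R)
  (x : vec3) (j : state) (i : idx) : R :=
  match i with
  | I1 => r - x I1 - b1 * x I2 - c1 j * x I3
  | I2 => r - x I2 - b2 * x I1 - c2 j * x I3
  | I3 => e1 j * x I1 + e2 j * x I2 - d
  end.

(* Almost every path of
   a continuous-time Markov chain on {1,2} with finite rates is of this form. *)
Definition switching_path (xi : R -> state) : Prop :=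
  exists tau : nat -> R,
    tau O = 0 /\
    (forall n, tau n < tau (S n)) /\
    (forall M, exists n, M < tau n) /\
    (forall n t, tau n <= t < tau (S n) -> xi t = xi (tau n)).

(* X is a solution on [0,oo) of dX_i/dt = X_i f_i(X, xi) with X(0) = x0:
   each component is continuous on [0,oo) and, at every t >= 0, has right
   derivative X_i(t) f_i(X(t), xi(t)) (xi is right-continuous; at non-switching
   times t > 0 this together with continuity gives the classical derivative). *)
Definition solution (r d b1 b2 : R) (c1 c2 e1 e2 : state -> R)
  (xi : R -> state) (x0 : vec3) (X : R -> vec3) : Prop :=
  (forall i, X 0 i = x0 i) /\
  (forall i t, 0 < t -> continuous (fun s => X s i) t) /\
  (forall i t, 0 <= t ->
     filterlim (fun h => (X (t + h) i - X t i) / h) (at_right 0)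
       (locally (X t i * fvec r d b1 b2 c1 c2 e1 e2 (X t) (xi t) i))).

(* Compact subsets of R^3: closed and bounded (Heine-Borel). *)
Definition bounded3 (K : vec3 -> Prop) : Prop :=
  exists M, forall x, K x -> forall i, Rabs (x i) <= M.
Definition closed3 (K : vec3 -> Prop) : Prop :=
  forall x, ~ K x -> exists eps, 0 < eps /\
    forall y, (forall i, Rabs (y i - x i) < eps) -> ~ K y.
Definition compact3 (K : vec3 -> Prop) : Prop := bounded3 K /\ closed3 K.

(* Main.v *)
Require Import Defs.
From Stdlib Require Import Reals Lra Lia Classical ClassicalEpsilon.
From Coquelicot Require Import Coquelicot.
Open Scope R_scope.
Set Bullet Behavior "Strict Subproofs".

Lemma ballR (x e y : R) : ball x e y <-> Rabs (y - x) < e.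
Proof. reflexivity. Qed.

Lemma cont_eps (f : R -> R) t :
  continuous f t <-> forall eps, 0 < eps -> exists del, 0 < del /\
     forall s, Rabs (s - t) < del -> Rabs (f s - f t) < eps.
Proof.
  unfold continuous. rewrite filterlim_locally. split.
  - intros H eps He.
    destruct (H (mkposreal eps He)) as [[d Hd] Hl].
    exists d; split; [exact Hd|]. intros s Hs. apply ballR. apply (Hl s). apply ballR. exact Hs.
  - intros H [eps He].
    destruct (H eps He) as [d [Hd Hl]]. exists (mkposreal d Hd). intros s Hs.
    apply ballR. apply Hl. apply ballR in Hs. exact Hs.
Qed.

Definition rd (f : R -> R) (t l : R) :=
  filterlim (fun h => (f (t + h) - f t) / h) (at_right 0) (locally l).

Lemma rd_eps f t l : rd f t l <-> forall eps, 0 < eps -> exists del, 0 < del /\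
   forall h, 0 < h < del -> Rabs ((f (t + h) - f t) / h - l) < eps.
Proof.
  unfold rd. rewrite filterlim_locally. split.
  - intros H eps He.
    destruct (H (mkposreal eps He)) as [[d Hd] Hl].
    exists d; split; [exact Hd|]. intros h Hh. apply ballR. apply (Hl h).
    apply ballR. rewrite Rminus_0_r, Rabs_pos_eq; simpl; lra. lra.
  - intros H [eps He].
    destruct (H eps He) as [d [Hd Hl]]. exists (mkposreal d Hd). intros s Hs Hs0.
    apply ballR. apply Hl. apply ballR in Hs.
    change (Rabs (s - 0) < d) in Hs. rewrite Rminus_0_r, Rabs_pos_eq in Hs; lra.
Qed.

Definition limr (g : R -> R) (l : R) := filterlim g (at_right 0) (locally l).

Lemma limr_eps g l : limr g l <-> forall eps, 0 < eps -> exists del, 0 < del /\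
   forall h, 0 < h < del -> Rabs (g h - l) < eps.
Proof.
  unfold limr. rewrite filterlim_locally. split.
  - intros H eps He.
    destruct (H (mkposreal eps He)) as [[d Hd] Hl].
    exists d; split; [exact Hd|]. intros h Hh. apply ballR. apply (Hl h).
    apply ballR. rewrite Rminus_0_r, Rabs_pos_eq; simpl; lra. lra.
  - intros H [eps He].
    destruct (H eps He) as [d [Hd Hl]]. exists (mkposreal d Hd). intros s Hs Hs0.
    apply ballR. apply Hl. apply ballR in Hs.
    change (Rabs (s - 0) < d) in Hs. rewrite Rminus_0_r, Rabs_pos_eq in Hs; lra.
Qed.

Lemma limr_plus g1 g2 l1 l2 : limr g1 l1 -> limr g2 l2 ->
  limr (fun h => g1 h + g2 h) (l1 + l2).
Proof.
  intros H1 H2. unfold limr.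
  apply (filterlim_comp_2 g1 g2 Rplus H1 H2). apply (filterlim_plus l1 l2).
Qed.

Lemma limr_mult g1 g2 l1 l2 : limr g1 l1 -> limr g2 l2 ->
  limr (fun h => g1 h * g2 h) (l1 * l2).
Proof.
  intros H1 H2. unfold limr.
  apply (filterlim_comp_2 g1 g2 Rmult H1 H2). apply (filterlim_mult l1 l2).
Qed.

Lemma limr_const c : limr (fun _ => c) c.
Proof. unfold limr. apply filterlim_const. Qed.

Lemma limr_ext g1 g2 l : (forall h, 0 < h -> g1 h = g2 h) -> limr g1 l -> limr g2 l.
Proof.
  intros He H. apply limr_eps. intros eps Heps.
  destruct (proj1 (limr_eps g1 l) H eps Heps) as [d [Hd Hl]].
  exists d; split; [exact Hd|]. intros h Hh. rewrite <- He by lra. apply Hl; lra.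
Qed.

Lemma limr_id : limr (fun h => h) 0.
Proof.
  apply limr_eps. intros eps He. exists eps; split; [exact He|].
  intros h Hh. rewrite Rminus_0_r, Rabs_pos_eq; lra.
Qed.

Lemma limr_eq g l l' : limr g l -> l = l' -> limr g l'.
Proof. intros H <-; exact H. Qed.

Lemma rd_limr f t l : rd f t l <-> limr (fun h => (f (t + h) - f t) / h) l.
Proof. reflexivity. Qed.

Lemma rd_rcont f t l : rd f t l -> limr (fun h => f (t + h)) (f t).
Proof.
  intros H. apply (limr_ext (fun h => f t + h * ((f (t + h) - f t) / h))).
  { intros h Hh. field. lra. }
  apply (limr_eq _ (f t + 0 * l)); [|ring].
  apply limr_plus. apply limr_const. apply limr_mult. apply limr_id. exact H.
Qed.

Lemma rd_plus f g t l1 l2 : rd f t l1 -> rd g t l2 ->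
  rd (fun s => f s + g s) t (l1 + l2).
Proof.
  intros H1 H2. apply rd_limr.
  apply (limr_ext (fun h => (f (t + h) - f t) / h + (g (t + h) - g t) / h)).
  { intros h Hh. field. lra. }
  apply limr_plus; assumption.
Qed.

Lemma rd_scal c f t l : rd f t l -> rd (fun s => c * f s) t (c * l).
Proof.
  intros H. apply rd_limr.
  apply (limr_ext (fun h => c * ((f (t + h) - f t) / h))).
  { intros h Hh. field. lra. }
  apply limr_mult. apply limr_const. exact H.
Qed.

Lemma rd_const c t : rd (fun _ => c) t 0.
Proof.
  apply rd_limr. apply (limr_ext (fun _ => 0)).
  { intros h Hh. field. lra. }
  apply limr_const.
Qed.

Lemma rd_id t : rd (fun s => s) t 1.
Proof.
  apply rd_limr. apply (limr_ext (fun _ => 1)).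
  { intros h Hh. field. lra. }
  apply limr_const.
Qed.

Lemma rd_mult f g t l1 l2 : rd f t l1 -> rd g t l2 ->
  rd (fun s => f s * g s) t (f t * l2 + l1 * g t).
Proof.
  intros H1 H2. apply rd_limr.
  apply (limr_ext (fun h => f (t + h) * ((g (t + h) - g t) / h) + (f (t + h) - f t) / h * g t)).
  { intros h Hh. field. lra. }
  apply limr_plus. apply limr_mult. apply (rd_rcont f t l1 H1). exact H2.
  apply limr_mult. exact H1. apply limr_const.
Qed.

Lemma rd_minus f g t l1 l2 : rd f t l1 -> rd g t l2 ->
  rd (fun s => f s - g s) t (l1 - l2).
Proof.
  intros H1 H2. 
  apply (limr_ext (fun h => ((f (t + h) + (-1) * g (t+h)) - (f t + (-1) * g t)) / h)).
  { intros h Hh. field. lra. }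
  apply (limr_eq _ (l1 + (-1) * l2)); [|ring].
  apply (rd_plus f (fun s => -1 * g s)). exact H1. apply rd_scal. exact H2.
Qed.

Lemma rd_ext f g t l : (exists d, 0 < d /\ forall h, 0 <= h < d -> f (t + h) = g (t + h)) ->
  rd f t l -> rd g t l.
Proof.
  intros [d [Hd He]] H. apply rd_eps. intros eps Heps.
  destruct (proj1 (rd_eps f t l) H eps Heps) as [d' [Hd' Hl]].
  exists (Rmin d d'); split. apply Rmin_pos; lra.
  intros h Hh. pose proof (Rmin_l d d'). pose proof (Rmin_r d d').
  assert (E0 : g t = f t). { pose proof (He 0) as E. rewrite Rplus_0_r in E. symmetry; apply E; lra. }
  rewrite <- (He h) by lra. rewrite E0. apply Hl. lra.
Qed.

Lemma rd_of_derive f t l : is_derive f t l -> rd f t l.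
Proof.
  intros H. apply is_derive_Reals in H. apply rd_eps. intros eps He.
  destruct (H eps He) as [[d Hd] Hl]. exists d; split; [exact Hd|].
  intros h Hh. apply Hl. lra. simpl. rewrite Rabs_pos_eq; lra.
Qed.

Lemma real_ind (a b : R) (P : R -> Prop) : a <= b ->
  (forall s, a <= s <= b -> (forall u, a <= u < s -> P u) -> P s) ->
  (forall s, a <= s < b -> P s -> exists d, 0 < d /\ forall u, s < u < s + d -> u <= b -> P u) ->
  forall s, a <= s <= b -> P s.
Proof.
  intros Hab H1 H2.
  set (E := fun x => a <= x <= b /\ forall u, a <= u <= x -> P u).
  assert (Pa : P a). { apply H1. lra. intros u Hu; lra. }
  assert (Ea : E a). { split. lra. intros u Hu. replace u with a by lra. exact Pa. }
  assert (Eb : bound E). { exists b. intros x [Hx _]. lra. }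
  destruct (completeness E Eb (ex_intro _ a Ea)) as [c [Hc1 Hc2]].
  assert (Hac : a <= c) by (apply Hc1; exact Ea).
  assert (Hcb : c <= b) by (apply Hc2; intros x [Hx _]; lra).
  assert (Q : forall u, a <= u < c -> P u).
  { intros u Hu. destruct (Rlt_or_le u c) as [_|]; [|lra].
    destruct (classic (exists x, E x /\ u < x)) as [[x [[Hx1 Hx2] Hux]]|Hn].
    - apply Hx2. lra.
    - assert (c <= u). { apply Hc2. intros x Ex. destruct (Rle_or_lt x u); auto.
        exfalso. apply Hn. exists x; auto. } lra. }
  assert (Pc : P c) by (apply H1; [lra|exact Q]).
  assert (Ec : E c). { split. lra. intros u Hu. destruct (Rlt_or_le u c). apply Q; lra.
    replace u with c by lra. exact Pc. }
  assert (Hcb' : c = b).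
  { destruct (Rlt_or_le c b) as [Hlt|]; [|lra]. exfalso.
    destruct (H2 c (conj Hac Hlt) Pc) as [d [Hd Hu]].
    remember (Rmin (c + d/2) b) as x' eqn:Ex'd.
    pose proof (Rmin_l (c + d/2) b). pose proof (Rmin_r (c+d/2) b).
    assert (c < x'). { rewrite Ex'd. apply Rmin_glb_lt; lra. }
    rewrite <- Ex'd in *.
    assert (Ex' : E x').
    { 
      split. lra. intros u Hu'. destruct (Rle_or_lt u c). apply (proj2 Ec); lra.
      apply Hu; lra. }
    pose proof (Hc1 x' Ex'). lra. }
  subst c. intros s Hs. apply (proj2 Ec). lra.
Qed.

Lemma G1_aux (a b L eps : R) (z D : R -> R) : a <= b -> 0 <= L -> 0 < eps ->
  (forall t, a < t <= b -> continuous z t) ->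
  (forall t, a <= t < b -> rd z t (D t)) ->
  (forall t, a <= t < b -> 0 < z t -> z t <= eps * exp ((L+1) * (b - a)) -> D t <= L * z t) ->
  z a <= 0 -> z b <= eps * exp ((L+1) * (b - a)).
Proof.
  intros Hab HL He Hc Hd HD Ha.
  set (E := fun s => eps * exp ((L+1) * (s - a))).
  assert (Emono : forall u v, u <= v -> E u <= E v).
  { intros u v Huv. unfold E. apply Rmult_le_compat_l. lra.
    destruct (Req_dec u v). subst; lra. left; apply exp_increasing. nra. }
  assert (Epos : forall u, 0 < E u). { intros u; unfold E. apply Rmult_lt_0_compat. lra. apply exp_pos. }
  change (z b <= E b).
  apply (real_ind a b (fun s => z s <= E s)); [lra| | |lra].
  - intros s Hs IH. destruct (Req_dec s a) as [->|Hsa].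
    { pose proof (Epos a). lra. }
    destruct (Rle_or_lt (z s) (E s)) as [|Hgt]; [assumption|exfalso].
    set (eta := z s - E s).
    destruct (proj1 (cont_eps z s) (Hc s ltac:(lra)) (eta/2) ltac:(unfold eta; lra)) as [d1 [Hd1 Hl]].
    set (u := s - Rmin d1 (s - a) / 2).
    pose proof (Rmin_l d1 (s-a)). pose proof (Rmin_r d1 (s-a)).
    assert (0 < Rmin d1 (s - a)) by (apply Rmin_pos; lra).
    assert (Hu : a <= u < s) by (unfold u; lra).
    pose proof (IH u Hu). pose proof (Emono u s ltac:(lra)).
    assert (Hus : Rabs (u - s) < d1). { unfold u. rewrite Rabs_left; lra. }
    pose proof (Hl u Hus) as Hz. apply Rabs_def2 in Hz. unfold eta in *. lra.
  - intros s Hs Ps. destruct Ps as [Hlt|Heq].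
    + set (eta := E s - z s).
      destruct (proj1 (limr_eps _ _) (rd_rcont z s (D s) (Hd s Hs)) eta ltac:(unfold eta; lra)) as [d [Hd0 Hl]].
      exists d; split; [exact Hd0|]. intros u Hu Hub.
      pose proof (Hl (u - s) ltac:(lra)). replace (s + (u - s)) with u in H by ring.
      apply Rabs_def2 in H. pose proof (Emono s u ltac:(lra)). unfold eta in *. lra.
    + assert (Hzs : 0 < z s) by (rewrite Heq; apply Epos).
      assert (HDs : D s <= L * z s).
      { apply HD. exact Hs. exact Hzs. rewrite Heq. apply (Emono s b). lra. }
      destruct (proj1 (rd_eps z s (D s)) (Hd s Hs) (E s) (Epos s)) as [d [Hd0 Hl]].
      exists d; split; [exact Hd0|]. intros u Hu Hub.
      pose proof (Hl (u - s) ltac:(lra)). replace (s + (u - s)) with u in H by ring.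
      apply Rabs_def2 in H. destruct H as [H _].
      assert (Hq : z u - z s < (L + 1) * E s * (u - s)).
      { assert (Hx : (z u - z s) / (u - s) < (L+1) * E s) by nra.
        apply (Rmult_lt_compat_r (u - s)) in Hx; [|lra].
        unfold Rdiv in Hx. rewrite Rmult_assoc, Rinv_l in Hx by lra. lra. }
      assert (HE : E u = E s * exp ((L+1) * (u - s))).
      { unfold E. rewrite Rmult_assoc, <- exp_plus. f_equal. f_equal. ring. }
      pose proof (exp_ineq1 ((L+1) * (u - s)) ltac:(nra)).
      pose proof (Epos s). nra.
Qed.

Lemma G1 (a b L del : R) (z D : R -> R) : a <= b -> 0 <= L -> 0 < del ->
  (forall t, a < t <= b -> continuous z t) ->
  (forall t, a <= t < b -> rd z t (D t)) ->
  (forall t, a <= t < b -> 0 < z t -> z t < del -> D t <= L * z t) ->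
  z a <= 0 -> z b <= 0.
Proof.
  intros Hab HL Hdel Hc Hd HD Ha.
  set (Eb := exp ((L+1) * (b - a))). assert (HEb : 0 < Eb) by apply exp_pos.
  destruct (Rle_or_lt (z b) 0) as [|Hzb]; [assumption|exfalso].
  set (eps := Rmin (del / (2 * Eb)) (z b / (2 * Eb))).
  assert (Heps : 0 < eps). { apply Rmin_pos; apply Rdiv_lt_0_compat; lra. }
  pose proof (Rmin_l (del / (2 * Eb)) (z b / (2 * Eb))) as Hm1.
  pose proof (Rmin_r (del / (2 * Eb)) (z b / (2 * Eb))) as Hm2. fold eps in Hm1, Hm2.
  assert (H1 : eps * Eb <= del / 2).
  { apply (Rmult_le_compat_r Eb) in Hm1; [|lra]. 
    replace (del / (2 * Eb) * Eb) with (del / 2) in Hm1 by (field; lra). lra. }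
  assert (H2 : eps * Eb <= z b / 2).
  { apply (Rmult_le_compat_r Eb) in Hm2; [|lra]. 
    replace (z b / (2 * Eb) * Eb) with (z b / 2) in Hm2 by (field; lra). lra. }
  pose proof (G1_aux a b L eps z D Hab HL Heps Hc Hd) as G.
  assert (z b <= eps * Eb).
  { apply G; [|exact Ha]. intros t Ht Hz Hz2. apply HD; auto. fold Eb in Hz2. lra. }
  lra.
Qed.

Lemma bdd_compact (f : R -> R) a b : a <= b ->
  (forall t, a < t <= b -> continuous f t) ->
  (forall t, a <= t < b -> limr (fun h => f (t + h)) (f t)) ->
  exists M, forall t, a <= t <= b -> Rabs (f t) <= M.
Proof.
  intros Hab Hc Hr.
  assert (H := real_ind a b (fun s => exists M, forall t, a <= t <= s -> Rabs (f t) <= M) Hab).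
  cut (exists M, forall t, a <= t <= b -> Rabs (f t) <= M). { auto. }
  apply H; [ | | lra].
  - intros s Hs IH. destruct (Req_dec s a) as [->|Hsa].
    { exists (Rabs (f a)). intros t Ht. replace t with a by lra. lra. }
    destruct (proj1 (cont_eps f s) (Hc s ltac:(lra)) 1 ltac:(lra)) as [d1 [Hd1 Hl]].
    set (u := s - Rmin d1 (s - a) / 2).
    pose proof (Rmin_l d1 (s-a)). pose proof (Rmin_r d1 (s-a)).
    assert (0 < Rmin d1 (s - a)) by (apply Rmin_pos; lra).
    destruct (IH u ltac:(unfold u; lra)) as [M0 HM0].
    exists (Rmax M0 (Rabs (f s) + 1)). intros t Ht.
    destruct (Rle_or_lt t u).
    + eapply Rle_trans; [apply HM0; lra| apply Rmax_l].
    + eapply Rle_trans; [|apply Rmax_r].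
      assert (Hts : Rabs (t - s) < d1). { unfold u in *. apply Rabs_def1; lra. }
      pose proof (Hl t Hts). pose proof (Rabs_triang_inv (f t) (f s)). lra.
  - intros s Hs [M0 HM0].
    destruct (proj1 (limr_eps _ _) (Hr s Hs) 1 ltac:(lra)) as [d [Hd Hl]].
    exists d; split; [exact Hd|]. intros u Hu Hub.
    exists (Rmax M0 (Rabs (f s) + 1)). intros t Ht.
    destruct (Rle_or_lt t s).
    + eapply Rle_trans; [apply HM0; lra| apply Rmax_l].
    + eapply Rle_trans; [|apply Rmax_r].
      pose proof (Hl (t - s) ltac:(lra)) as Hq. replace (s + (t - s)) with t in Hq by ring.
      pose proof (Rabs_triang_inv (f t) (f s)). lra.
Qed.

Lemma cR_plus (f g : R -> R) t : continuous f t -> continuous g t ->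
  continuous (fun s => f s + g s) t.
Proof. intros H1 H2. exact (continuous_plus f g t H1 H2). Qed.
Lemma cR_mult (f g : R -> R) t : continuous f t -> continuous g t ->
  continuous (fun s => f s * g s) t.
Proof. intros H1 H2. exact (continuous_mult f g t H1 H2). Qed.
Lemma cR_minus (f g : R -> R) t : continuous f t -> continuous g t ->
  continuous (fun s => f s - g s) t.
Proof. intros H1 H2. exact (continuous_minus f g t H1 H2). Qed.
Lemma cR_const (c : R) t : continuous (fun _ : R => c) t.
Proof. exact (continuous_const c t). Qed.
Lemma cR_id t : continuous (fun s : R => s) t.
Proof. exact (continuous_id t). Qed.
Lemma cR_ext (f g : R -> R) t : (forall s, f s = g s) -> continuous f t -> continuous g t.
Proof. intros He H. apply cont_eps. intros eps Heps.
  destruct (proj1 (cont_eps f t) H eps Heps) as [d [Hd Hl]]. exists d; split; auto.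
  intros s Hs. rewrite <- !He. auto. Qed.
Lemma cR_comp (f g : R -> R) t : continuous f t -> continuous g (f t) ->
  continuous (fun s => g (f s)) t.
Proof. intros H1 H2. exact (continuous_comp f g t H1 H2). Qed.
Lemma cR_Rmax0 t : continuous (fun s => Rmax 0 s) t.
Proof. apply cont_eps. intros eps He. exists eps; split; auto. intros s Hs.
  unfold Rmax. destruct (Rle_dec 0 s), (Rle_dec 0 t); apply Rabs_def1; apply Rabs_def2 in Hs; lra. Qed.
Lemma cR_exp (f : R -> R) t : continuous f t -> continuous (fun s => exp (f s)) t.
Proof. intros H. apply (cR_comp f exp). exact H.
  apply (ex_derive_continuous (K := R_AbsRing) (V := R_NormedModule) exp).
  exists (exp (f t)). apply is_derive_Reals. apply derivable_pt_lim_exp. Qed.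

Lemma half_pow_pos n : 0 < (/2) ^ n.
Proof. apply pow_lt. lra. Qed.

Lemma half_small (C eps : R) : 0 < eps -> exists N, forall n, (N <= n)%nat -> C * (/2) ^ n < eps.
Proof.
  intros He. pose proof (is_lim_seq_geom (/2) ltac:(rewrite Rabs_pos_eq; lra)) as H.
  apply is_lim_seq_spec in H.
  destruct (H (mkposreal (eps / (Rabs C + 1)) ltac:(apply Rdiv_lt_0_compat; [lra| pose proof (Rabs_pos C); lra]))) as [N HN].
  exists N. intros n Hn. specialize (HN n Hn). simpl in HN.
  rewrite Rminus_0_r, Rabs_pos_eq in HN by (left; apply half_pow_pos).
  pose proof (half_pow_pos n). pose proof (Rabs_pos C). pose proof (Rle_abs C).
  apply (Rmult_lt_compat_l (Rabs C + 1)) in HN; [|lra].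
  replace ((Rabs C + 1) * (eps / (Rabs C + 1))) with eps in HN by (field; lra). nra.
Qed.

Lemma zero_of_half (a C : R) : (forall n, Rabs a <= C * (/2) ^ n) -> a = 0.
Proof.
  intros H. destruct (Req_dec a 0); auto. exfalso.
  assert (0 < Rabs a) by (apply Rabs_pos_lt; auto).
  destruct (half_small C (Rabs a) H1) as [N HN]. specialize (HN N (le_n N)).
  specialize (H N). lra.
Qed.

Definition Nd (x y : vec3) := Rabs (x I1 - y I1) + Rabs (x I2 - y I2) + Rabs (x I3 - y I3).

Lemma Nd_comp x y i : Rabs (x i - y i) <= Nd x y.
Proof. unfold Nd. pose proof (Rabs_pos (x I1 - y I1)). pose proof (Rabs_pos (x I2 - y I2)).
  pose proof (Rabs_pos (x I3 - y I3)). destruct i; lra. Qed.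

Definition sg (x : R) := if Rle_dec 0 x then 1 else -1.
Lemma sg_le c a : sg c * a <= Rabs a.
Proof. unfold sg. destruct (Rle_dec 0 c); pose proof (Rle_abs a); pose proof (Rabs_maj2 a); lra. Qed.
Lemma sg_eq a : sg a * a = Rabs a.
Proof. unfold sg. destruct (Rle_dec 0 a). rewrite Rabs_pos_eq; lra. rewrite Rabs_left; lra. Qed.

Lemma is_derive_RInt0 (g : R -> R) : (forall s, continuous g s) ->
  forall u, is_derive (fun b => RInt g 0 b) u (g u).
Proof.
  intros Hg u. apply (is_derive_RInt g (fun b => RInt g 0 b) 0 u).
  - exists (mkposreal 1 Rlt_0_1). intros b _. apply (RInt_correct (V := R_CompleteNormedModule)).
    apply ex_RInt_continuous. intros z _. apply Hg.
  - apply Hg.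
Qed.

Lemma cont_RInt0 (g : R -> R) : (forall s, continuous g s) ->
  forall u, continuous (fun b => RInt g 0 b) u.
Proof.
  intros Hg u. apply (ex_derive_continuous (K := R_AbsRing) (V := R_NormedModule)).
  exists (g u). apply is_derive_RInt0. exact Hg.
Qed.

Section Picard.
Variable G : vec3 -> vec3.
Variables Lc Bg : R.
Hypothesis HLc : 0 < Lc.
Hypothesis HBg : 0 <= Bg.
Hypothesis Glip : forall x y, Nd (G x) (G y) <= Lc * Nd x y.
Hypothesis Gbd : forall x i, Rabs (G x i) <= Bg.
Variable v : vec3.

Lemma Gcont (f : R -> vec3) t : (forall k, continuous (fun s => f s k) t) ->
  forall i, continuous (fun s => G (f s) i) t.
Proof.
  intros Hf i. apply cont_eps. intros eps He.
  set (e' := eps / (3 * Lc)). assert (He' : 0 < e') by (unfold e'; apply Rdiv_lt_0_compat; lra).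
  destruct (proj1 (cont_eps _ t) (Hf I1) e' He') as [d1 [Hd1 H1]].
  destruct (proj1 (cont_eps _ t) (Hf I2) e' He') as [d2 [Hd2 H2]].
  destruct (proj1 (cont_eps _ t) (Hf I3) e' He') as [d3 [Hd3 H3]].
  exists (Rmin d1 (Rmin d2 d3)). split. repeat apply Rmin_pos; auto.
  intros s Hs. pose proof (Rmin_l d1 (Rmin d2 d3)). pose proof (Rmin_r d1 (Rmin d2 d3)).
  pose proof (Rmin_l d2 d3). pose proof (Rmin_r d2 d3).
  specialize (H1 s ltac:(lra)). specialize (H2 s ltac:(lra)). specialize (H3 s ltac:(lra)).
  eapply Rle_lt_trans. apply Nd_comp. eapply Rle_lt_trans. apply Glip.
  unfold Nd. replace eps with (Lc * (3 * e')) by (unfold e'; field; lra).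
  apply Rmult_lt_compat_l; lra.
Qed.

Fixpoint Pic (n : nat) (t : R) : vec3 :=
  match n with
  | O => v
  | S n => fun i => v i + RInt (fun s => G (Pic n s) i) 0 (Rmax 0 t)
  end.

Lemma Pic_cont n : forall i t, continuous (fun s => Pic n s i) t.
Proof.
  induction n; intros i t; simpl.
  - apply cR_const.
  - apply cR_plus. apply cR_const.
    apply (cR_comp (fun s => Rmax 0 s) (fun b => RInt (fun s => G (Pic n s) i) 0 b)).
    apply cR_Rmax0. apply cont_RInt0. intros s. apply Gcont. intros k; apply IHn.
Qed.

Lemma Pic_neg n t i : t <= 0 -> Pic n t i = v i.
Proof.
  intros Ht. destruct n; simpl. reflexivity.
  rewrite Rmax_left by lra. rewrite RInt_point. unfold zero; simpl. ring.
Qed.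

Lemma Pic_rd n t i : 0 <= t -> rd (fun s => Pic (S n) s i) t (G (Pic n t) i).
Proof.
  intros Ht. simpl.
  apply (rd_ext (fun s => v i + RInt (fun s => G (Pic n s) i) 0 s)).
  { exists 1; split; [lra|]. intros h Hh. rewrite Rmax_right by lra. reflexivity. }
  apply rd_of_derive.
  pose proof (is_derive_plus (K := R_AbsRing) (V := R_NormedModule) (fun _ => v i) (fun b => RInt (fun s => G (Pic n s) i) 0 b) t zero (G (Pic n t) i) (is_derive_const _ _)
    (is_derive_RInt0 _ (fun s => Gcont _ s (fun k => Pic_cont n k s) i) t)) as Hd.
  replace (G (Pic n t) i) with (plus zero (G (Pic n t) i)) by (unfold plus, zero; simpl; ring).
  exact Hd.
Qed.

Definition Kc := 3 * Bg / Lc.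

Lemma rd_sum3 (f g : R -> vec3) (df dg : vec3) (c1 c2 c3 : R) t :
  (forall k, rd (fun s => f s k) t (df k)) -> (forall k, rd (fun s => g s k) t (dg k)) ->
  rd (fun s => c1 * (f s I1 - g s I1) + c2 * (f s I2 - g s I2) + c3 * (f s I3 - g s I3)) t
     (c1 * (df I1 - dg I1) + c2 * (df I2 - dg I2) + c3 * (df I3 - dg I3)).
Proof.
  intros Hf Hg. repeat apply rd_plus; apply rd_scal; apply rd_minus; auto.
Qed.

Lemma cont_sum3 (f g : R -> vec3) (c1 c2 c3 : R) t :
  (forall k, continuous (fun s => f s k) t) -> (forall k, continuous (fun s => g s k) t) ->
  continuous (fun s => c1 * (f s I1 - g s I1) + c2 * (f s I2 - g s I2) + c3 * (f s I3 - g s I3)) t.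
Proof.
  intros Hf Hg. repeat apply cR_plus; apply cR_mult; try apply cR_const; apply cR_minus; auto.
Qed.

Lemma rd_expo (A B : R) t : rd (fun s => A * exp (B * s)) t (A * B * exp (B * t)).
Proof. apply rd_of_derive. auto_derive; auto. ring. Qed.

Lemma Pic_bound n : forall t, 0 <= t -> Nd (Pic (S n) t) (Pic n t) <= Kc * exp (2 * Lc * t) * (/2) ^ n.
Proof.
  assert (HKc : 0 <= Kc) by (unfold Kc; apply Rmult_le_pos; [lra| left; apply Rinv_0_lt_compat; lra]).
  induction n; intros t Ht.
  - set (a := fun k => Pic 1 t k - Pic 0 t k).
    set (z := fun s => sg (a I1) * (Pic 1 s I1 - Pic 0 s I1) + sg (a I2) * (Pic 1 s I2 - Pic 0 s I2)
               + sg (a I3) * (Pic 1 s I3 - Pic 0 s I3) - Kc * exp (2 * Lc * s)).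
    assert (Hz : z t <= 0).
    { apply (G1 0 t 0 1 z (fun s => sg (a I1) * (G v I1 - 0) + sg (a I2) * (G v I2 - 0) + sg (a I3) * (G v I3 - 0)
               - Kc * (2 * Lc) * exp (2 * Lc * s))); try lra.
      - intros s _. unfold z. apply cR_minus. apply cont_sum3; intros; apply Pic_cont.
        apply cR_mult. apply cR_const. apply cR_exp. apply cR_mult; [apply cR_const|apply cR_id].
      - intros s Hs. unfold z. apply rd_minus. apply (rd_sum3 (Pic 1) (Pic 0) (G (Pic 0 s)) (fun _ => 0)).
        intros k. apply Pic_rd; lra. intros k. simpl. apply (rd_const (v k)). apply rd_expo.
      - intros s Hs _ _. 
        pose proof (sg_le (a I1) (G v I1)). pose proof (sg_le (a I2) (G v I2)). pose proof (sg_le (a I3) (G v I3)).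
        pose proof (Gbd v I1). pose proof (Gbd v I2). pose proof (Gbd v I3).
        assert (1 <= exp (2 * Lc * s)). { rewrite <- exp_0. destruct (Req_dec s 0). subst. rewrite Rmult_0_r. lra.
          left. apply exp_increasing. nra. }
        assert (Kc * (2 * Lc) = 6 * Bg) by (unfold Kc; field; lra). nra.
      - unfold z. rewrite !Pic_neg by lra. rewrite Rmult_0_r, exp_0. lra. }
    unfold z in Hz. rewrite !sg_eq in Hz. unfold Nd. simpl pow. fold (a I1) (a I2) (a I3). unfold a. lra.
  - set (a := fun k => Pic (S (S n)) t k - Pic (S n) t k).
    set (z := fun s => sg (a I1) * (Pic (S (S n)) s I1 - Pic (S n) s I1) + sg (a I2) * (Pic (S (S n)) s I2 - Pic (S n) s I2)
               + sg (a I3) * (Pic (S (S n)) s I3 - Pic (S n) s I3) - (Kc * (/2)^(S n)) * exp (2 * Lc * s)).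
    assert (Hz : z t <= 0).
    { apply (G1 0 t 0 1 z (fun s => sg (a I1) * (G (Pic (S n) s) I1 - G (Pic n s) I1) + sg (a I2) * (G (Pic (S n) s) I2 - G (Pic n s) I2) + sg (a I3) * (G (Pic (S n) s) I3 - G (Pic n s) I3)
               - (Kc * (/2)^(S n)) * (2 * Lc) * exp (2 * Lc * s))); try lra.
      - intros s _. unfold z. apply cR_minus. apply cont_sum3; intros; apply Pic_cont.
        apply cR_mult. apply cR_const. apply cR_exp. apply cR_mult; [apply cR_const|apply cR_id].
      - intros s Hs. unfold z. apply rd_minus. apply (rd_sum3 (Pic (S (S n))) (Pic (S n)) (G (Pic (S n) s)) (G (Pic n s))).
        intros k. apply Pic_rd; lra. intros k. apply Pic_rd; lra. apply rd_expo.
      - intros s Hs _ _.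
        pose proof (sg_le (a I1) (G (Pic (S n) s) I1 - G (Pic n s) I1)).
        pose proof (sg_le (a I2) (G (Pic (S n) s) I2 - G (Pic n s) I2)).
        pose proof (sg_le (a I3) (G (Pic (S n) s) I3 - G (Pic n s) I3)).
        pose proof (Glip (Pic (S n) s) (Pic n s)). pose proof (IHn s ltac:(lra)).
        unfold Nd in *. simpl pow.
        assert (0 <= exp (2 * Lc * s)) by (left; apply exp_pos).
        pose proof (half_pow_pos n). nra.
      - unfold z. rewrite !Pic_neg by lra. rewrite Rmult_0_r, exp_0.
        pose proof (half_pow_pos (S n)). nra. }
    unfold z in Hz. rewrite !sg_eq in Hz. unfold Nd. fold (a I1) (a I2) (a I3). unfold a. lra.
Qed.


Definition KT T := Kc * exp (2 * Lc * T).

Lemma KT_pos T : 0 <= KT T.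
Proof. unfold KT, Kc. apply Rmult_le_pos. apply Rmult_le_pos. lra. left; apply Rinv_0_lt_compat; lra.
  left; apply exp_pos. Qed.

Lemma Pic_bound' n t T : 0 <= T -> t <= T -> Nd (Pic (S n) t) (Pic n t) <= KT T * (/2) ^ n.
Proof.
  intros HT Ht. pose proof (half_pow_pos n). pose proof (KT_pos T).
  destruct (Rle_or_lt t 0).
  - unfold Nd. rewrite !Pic_neg by lra. rewrite !Rminus_eq_0, Rabs_R0. nra.
  - eapply Rle_trans. apply Pic_bound. lra. unfold KT.
    apply Rmult_le_compat_r. lra. apply Rmult_le_compat_l.
    unfold Kc. apply Rmult_le_pos. lra. left; apply Rinv_0_lt_compat; lra.
    destruct (Req_dec t T). subst; lra. left; apply exp_increasing. nra.
Qed.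

Lemma Pic_tel n k t T i : 0 <= T -> t <= T ->
  Rabs (Pic (n + k) t i - Pic n t i) <= 2 * KT T * (/2) ^ n - 2 * KT T * (/2) ^ (n + k).
Proof.
  intros HT Ht. induction k.
  - rewrite Nat.add_0_r, Rminus_eq_0, Rabs_R0. lra.
  - rewrite Nat.add_succ_r. 
    pose proof (Pic_bound' (n + k) t T HT Ht). pose proof (Nd_comp (Pic (S (n + k)) t) (Pic (n + k) t) i).
    pose proof (Rabs_triang (Pic (S (n + k)) t i - Pic (n + k) t i) (Pic (n + k) t i - Pic n t i)).
    replace (Pic (S (n + k)) t i - Pic (n + k) t i + (Pic (n + k) t i - Pic n t i)) with
      (Pic (S (n + k)) t i - Pic n t i) in H1 by ring.
    simpl pow. lra.
Qed.

Lemma Pic_close n m t T i : 0 <= T -> t <= T -> (n <= m)%nat ->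
  Rabs (Pic m t i - Pic n t i) <= 2 * KT T * (/2) ^ n.
Proof.
  intros HT Ht Hnm. replace m with (n + (m - n))%nat by lia.
  pose proof (Pic_tel n (m - n) t T i HT Ht). pose proof (half_pow_pos (n + (m - n))).
  pose proof (KT_pos T). nra.
Qed.

Lemma Pic_cauchy t i : ex_finite_lim_seq (fun n => Pic n t i).
Proof.
  apply ex_lim_seq_cauchy_corr. intros eps.
  set (T := Rmax 0 t). assert (HT : 0 <= T) by apply Rmax_l. assert (Ht : t <= T) by apply Rmax_r.
  destruct (half_small (2 * KT T) eps (cond_pos eps)) as [N HN].
  exists N. intros n m Hn Hm. destruct (Compare_dec.le_lt_dec n m).
  - rewrite Rabs_minus_sym. eapply Rle_lt_trans. apply Pic_close; eauto. apply HN; auto.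
  - eapply Rle_lt_trans. apply Pic_close; eauto. lia. apply HN; auto.
Qed.

Definition Xs (t : R) : vec3 := fun i => real (Lim_seq (fun n => Pic n t i)).

Lemma Xs_lim t i : is_lim_seq (fun n => Pic n t i) (Xs t i).
Proof.
  unfold Xs. pose proof (Lim_seq_correct' _ (Pic_cauchy t i)). exact H.
Qed.

Lemma Xs_approx n t T i : 0 <= T -> t <= T -> Rabs (Pic n t i - Xs t i) <= 2 * KT T * (/2) ^ n.
Proof.
  intros HT Ht. set (B := 2 * KT T * (/2) ^ n).
  destruct (Rle_or_lt (Rabs (Pic n t i - Xs t i)) B) as [|Hgt]; auto. exfalso.
  pose proof (proj2 (is_lim_seq_spec _ _) (Xs_lim t i)) as Hl. simpl in Hl.
  destruct (Hl (mkposreal (Rabs (Pic n t i - Xs t i) - B) ltac:(lra))) as [N HN].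
  specialize (HN (max N n) (Nat.le_max_l N n)). simpl in HN.
  pose proof (Pic_close n (max N n) t T i HT Ht (Nat.le_max_r N n)). fold B in H.
  pose proof (Rabs_triang (Pic n t i - Pic (max N n) t i) (Pic (max N n) t i - Xs t i)).
  replace (Pic n t i - Pic (max N n) t i + (Pic (max N n) t i - Xs t i)) with (Pic n t i - Xs t i) in H0 by ring.
  rewrite Rabs_minus_sym in H. lra.
Qed.

Lemma Xs_neg t i : t <= 0 -> Xs t i = v i.
Proof.
  intros Ht. apply Rminus_diag_uniq. apply (zero_of_half _ (2 * KT 0)). intros n.
  rewrite <- (Pic_neg n t i Ht). rewrite Rabs_minus_sym. apply Xs_approx; lra.
Qed.

Lemma Xs_cont t i : continuous (fun s => Xs s i) t.
Proof.
  apply cont_eps. intros eps He.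
  set (T := Rabs t + 1). assert (HT : 0 <= T) by (unfold T; pose proof (Rabs_pos t); lra).
  destruct (half_small (2 * KT T) (eps / 3) ltac:(lra)) as [N HN]. specialize (HN N (le_n N)).
  destruct (proj1 (cont_eps _ t) (Pic_cont N i t) (eps / 3) ltac:(lra)) as [d [Hd Hl]].
  exists (Rmin d 1). split. apply Rmin_pos; lra. intros s Hs.
  pose proof (Rmin_l d 1). pose proof (Rmin_r d 1).
  assert (HsT : s <= T). { unfold T. apply Rabs_def2 in Hs. pose proof (Rle_abs t). lra. }
  assert (HtT : t <= T). { unfold T. pose proof (Rle_abs t). lra. }
  pose proof (Xs_approx N s T i HT HsT). pose proof (Xs_approx N t T i HT HtT).
  specialize (Hl s ltac:(lra)).
  apply Rabs_le_between in H1. apply Rabs_le_between in H2. apply Rabs_def2 in Hl. apply Rabs_def1; lra.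
Qed.

Lemma Xs_int t i : 0 <= t -> Xs t i = v i + RInt (fun s => G (Xs s) i) 0 t.
Proof.
  intros Ht.
  assert (Hg : forall s, continuous (fun s => G (Xs s) i) s).
  { intros s. apply Gcont. intros k. apply Xs_cont. }
  apply Rminus_diag_uniq. apply (zero_of_half _ (2 * KT t + 2 * (t * (Lc * (3 * (2 * KT t)))))). intros n.
  assert (E : Pic (S n) t i - (v i + RInt (fun s => G (Xs s) i) 0 t) =
              RInt (fun s => G (Pic n s) i - G (Xs s) i) 0 t).
  { simpl. rewrite Rmax_right by lra.
    assert (Hx1 : ex_RInt (fun s => G (Pic n s) i) 0 t).
    { apply (ex_RInt_continuous (V := R_CompleteNormedModule)). intros z _. apply Gcont. intros k. apply Pic_cont. }
    assert (Hx2 : ex_RInt (fun s => G (Xs s) i) 0 t).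
    { apply (ex_RInt_continuous (V := R_CompleteNormedModule)). intros z _. apply Hg. }
    pose proof (RInt_minus (V := R_CompleteNormedModule) _ _ 0 t Hx1 Hx2) as HM.
    unfold minus, plus, opp in HM; simpl in HM. 
    replace (RInt (fun s => G (Pic n s) i - G (Xs s) i) 0 t) with
      (RInt (fun x : R => G (Pic n x) i + - G (Xs x) i) 0 t) by reflexivity.
    rewrite HM. ring. }
  assert (Hb : Rabs (RInt (fun s => G (Pic n s) i - G (Xs s) i) 0 t) <= (t - 0) * (Lc * (3 * (2 * KT t * (/2) ^ n)))).
  { apply abs_RInt_le_const. lra.
    apply (ex_RInt_continuous (V := R_CompleteNormedModule)). intros z _.
    apply cR_minus. apply Gcont. intros k. apply Pic_cont. apply Hg.
    intros s Hs. eapply Rle_trans. apply Nd_comp. eapply Rle_trans. apply Glip.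
    apply Rmult_le_compat_l. lra. unfold Nd.
    pose proof (Xs_approx n s t I1 ltac:(lra) ltac:(lra)).
    pose proof (Xs_approx n s t I2 ltac:(lra) ltac:(lra)).
    pose proof (Xs_approx n s t I3 ltac:(lra) ltac:(lra)). lra. }
  rewrite <- E in Hb.
  pose proof (Xs_approx (S n) t t i ltac:(lra) ltac:(lra)). simpl pow in H.
  pose proof (Rabs_triang (Xs t i - Pic (S n) t i) (Pic (S n) t i - (v i + RInt (fun s : R => G (Xs s) i) 0 t))).
  replace (Xs t i - Pic (S n) t i + (Pic (S n) t i - (v i + RInt (fun s : R => G (Xs s) i) 0 t)))
    with (Xs t i - (v i + RInt (fun s : R => G (Xs s) i) 0 t)) in H0 by ring.
  rewrite Rabs_minus_sym in H. pose proof (half_pow_pos n). pose proof (KT_pos t).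
  assert (0 <= t * (Lc * (3 * (2 * KT t))) * (/2)^n) by (apply Rmult_le_pos; [|lra]; apply Rmult_le_pos; [lra|]; apply Rmult_le_pos; lra).
  nra.
Qed.

Lemma Xs_rd t i : 0 <= t -> rd (fun s => Xs s i) t (G (Xs t) i).
Proof.
  intros Ht.
  assert (Hg : forall s, continuous (fun s => G (Xs s) i) s).
  { intros s. apply Gcont. intros k. apply Xs_cont. }
  apply (rd_ext (fun s => v i + RInt (fun s => G (Xs s) i) 0 s)).
  { exists 1; split; [lra|]. intros h Hh. rewrite <- Xs_int by lra. reflexivity. }
  apply rd_of_derive.
  pose proof (is_derive_plus (K := R_AbsRing) (V := R_NormedModule) (fun _ => v i) (fun b => RInt (fun s => G (Xs s) i) 0 b) t zero (G (Xs t) i) (is_derive_const _ _)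
    (is_derive_RInt0 _ Hg t)) as Hd.
  replace (G (Xs t) i) with (plus zero (G (Xs t) i)) by (unfold plus, zero; simpl; ring).
  exact Hd.
Qed.

Lemma Xs_0 i : Xs 0 i = v i.
Proof. apply Xs_neg. lra. Qed.

End Picard.

Lemma abs_mul_le (c C x M : R) : 0 <= c <= C -> Rabs x <= M -> Rabs (c * x) <= C * M.
Proof. intros Hc Hx. rewrite Rabs_mult, (Rabs_pos_eq c) by lra.
  pose proof (Rabs_pos x). apply Rmult_le_compat; lra. Qed.

Section Model.
Variables (r d b1 b2 : R) (c1 c2 e1 e2 : state -> R).
Hypotheses (hr : 0 < r) (hd : 0 < d) (hb1 : 0 < b1) (hb2 : 0 < b2)
  (hc1 : forall j, 0 < c1 j) (hc2 : forall j, 0 < c2 j)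
  (he1 : forall j, 0 < e1 j) (he2 : forall j, 0 < e2 j).

Definition fv := fvec r d b1 b2 c1 c2 e1 e2.
Definition F (j : state) (x : vec3) (i : idx) := x i * fv x j i.

Definition Cm := c1 s1 + c1 s2 + c2 s1 + c2 s2 + e1 s1 + e1 s2 + e2 s1 + e2 s2.
Lemma Cm_b j : c1 j <= Cm /\ c2 j <= Cm /\ e1 j <= Cm /\ e2 j <= Cm.
Proof.
  unfold Cm. pose proof (hc1 s1). pose proof (hc1 s2). pose proof (hc2 s1). pose proof (hc2 s2).
  pose proof (he1 s1). pose proof (he1 s2). pose proof (he2 s1). pose proof (he2 s2).
  destruct j; lra.
Qed.
Lemma Cm_pos : 0 < Cm.
Proof. destruct (Cm_b s1) as [H _]. pose proof (hc1 s1). lra. Qed.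

Definition Kf := 1 + b1 + b2 + 2 * Cm.
Definition Bf (M : R) := r + d + Kf * M.
Lemma Kf_pos : 0 < Kf. Proof. unfold Kf. pose proof Cm_pos. lra. Qed.

Lemma f_bound x j i M : (forall k, Rabs (x k) <= M) -> Rabs (fv x j i) <= Bf M.
Proof.
  intros Hx. pose proof (Hx I1) as H1. pose proof (Hx I2) as H2. pose proof (Hx I3) as H3.
  assert (HM : 0 <= M) by (pose proof (Rabs_pos (x I1)); lra).
  destruct (Cm_b j) as [Hc1 [Hc2 [He1 He2]]].
  pose proof (hc1 j). pose proof (hc2 j). pose proof (he1 j). pose proof (he2 j).
  pose proof (proj1 (Rabs_le_between _ _) H1). pose proof (proj1 (Rabs_le_between _ _) H2). pose proof (proj1 (Rabs_le_between _ _) H3).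
  pose proof (proj1 (Rabs_le_between _ _) (abs_mul_le b1 b1 (x I2) M ltac:(lra) H2)).
  pose proof (proj1 (Rabs_le_between _ _) (abs_mul_le b2 b2 (x I1) M ltac:(lra) H1)).
  pose proof (proj1 (Rabs_le_between _ _) (abs_mul_le (c1 j) Cm (x I3) M ltac:(lra) H3)).
  pose proof (proj1 (Rabs_le_between _ _) (abs_mul_le (c2 j) Cm (x I3) M ltac:(lra) H3)).
  pose proof (proj1 (Rabs_le_between _ _) (abs_mul_le (e1 j) Cm (x I1) M ltac:(lra) H1)).
  pose proof (proj1 (Rabs_le_between _ _) (abs_mul_le (e2 j) Cm (x I2) M ltac:(lra) H2)).
  assert (0 <= b1 * M) by nra. assert (0 <= b2 * M) by nra. assert (0 <= Cm * M) by (pose proof Cm_pos; nra).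
  unfold Bf, Kf, fv, fvec. apply Rabs_le. destruct i; nra.
Qed.

Lemma f_lip x y j i : Rabs (fv x j i - fv y j i) <= Kf * Nd x y.
Proof.
  destruct (Cm_b j) as [Hc1 [Hc2 [He1 He2]]].
  pose proof (hc1 j). pose proof (hc2 j). pose proof (he1 j). pose proof (he2 j).
  unfold Kf, Nd, fv, fvec.
  pose proof (Rabs_pos (x I1 - y I1)). pose proof (Rabs_pos (x I2 - y I2)). pose proof (Rabs_pos (x I3 - y I3)).
  destruct i.
  - replace (r - x I1 - b1 * x I2 - c1 j * x I3 - (r - y I1 - b1 * y I2 - c1 j * y I3))
      with (- (x I1 - y I1) + (- (b1 * (x I2 - y I2)) + - (c1 j * (x I3 - y I3)))) by ring.
    pose proof (abs_mul_le b1 b1 (x I2 - y I2) _ ltac:(lra) (Rle_refl _)).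
    pose proof (abs_mul_le (c1 j) Cm (x I3 - y I3) _ ltac:(lra) (Rle_refl _)).
    eapply Rle_trans. apply Rabs_triang. rewrite Rabs_Ropp.
    eapply Rle_trans. apply Rplus_le_compat_l. apply Rabs_triang. rewrite !Rabs_Ropp.
    assert (0 <= b2 * Rabs (x I1 - y I1)) by nra.
    assert (0 <= b2 * Rabs (x I2 - y I2)) by nra.
    assert (0 <= b2 * Rabs (x I3 - y I3)) by nra.
    assert (0 <= b1 * Rabs (x I1 - y I1)) by nra.
    assert (0 <= b1 * Rabs (x I3 - y I3)) by nra.
    assert (0 <= Cm * Rabs (x I1 - y I1)) by nra.
    assert (0 <= Cm * Rabs (x I2 - y I2)) by nra. nra.
  - replace (r - x I2 - b2 * x I1 - c2 j * x I3 - (r - y I2 - b2 * y I1 - c2 j * y I3))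
      with (- (x I2 - y I2) + (- (b2 * (x I1 - y I1)) + - (c2 j * (x I3 - y I3)))) by ring.
    pose proof (abs_mul_le b2 b2 (x I1 - y I1) _ ltac:(lra) (Rle_refl _)).
    pose proof (abs_mul_le (c2 j) Cm (x I3 - y I3) _ ltac:(lra) (Rle_refl _)).
    eapply Rle_trans. apply Rabs_triang. rewrite Rabs_Ropp.
    eapply Rle_trans. apply Rplus_le_compat_l. apply Rabs_triang. rewrite !Rabs_Ropp.
    assert (0 <= b2 * Rabs (x I2 - y I2)) by nra.
    assert (0 <= b2 * Rabs (x I3 - y I3)) by nra.
    assert (0 <= b1 * Rabs (x I1 - y I1)) by nra.
    assert (0 <= b1 * Rabs (x I2 - y I2)) by nra.
    assert (0 <= b1 * Rabs (x I3 - y I3)) by nra.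
    assert (0 <= Cm * Rabs (x I1 - y I1)) by nra.
    assert (0 <= Cm * Rabs (x I2 - y I2)) by nra. nra.
  - replace (e1 j * x I1 + e2 j * x I2 - d - (e1 j * y I1 + e2 j * y I2 - d))
      with (e1 j * (x I1 - y I1) + e2 j * (x I2 - y I2)) by ring.
    pose proof (abs_mul_le (e1 j) Cm (x I1 - y I1) _ ltac:(lra) (Rle_refl _)).
    pose proof (abs_mul_le (e2 j) Cm (x I2 - y I2) _ ltac:(lra) (Rle_refl _)).
    eapply Rle_trans. apply Rabs_triang.
    assert (0 <= b2 * Rabs (x I1 - y I1)) by nra.
    assert (0 <= b2 * Rabs (x I2 - y I2)) by nra.
    assert (0 <= b2 * Rabs (x I3 - y I3)) by nra.
    assert (0 <= b1 * Rabs (x I1 - y I1)) by nra.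
    assert (0 <= b1 * Rabs (x I2 - y I2)) by nra.
    assert (0 <= b1 * Rabs (x I3 - y I3)) by nra.
    assert (0 <= Cm * Rabs (x I3 - y I3)) by nra. nra.
Qed.


Definition cl (M y : R) := Rmax 0 (Rmin y M).
Definition clv (M : R) (x : vec3) : vec3 := fun i => cl M (x i).
Definition Gm (j : state) (M : R) (x : vec3) : vec3 := fun i => F j (clv M x) i.
Definition Lcm (M : R) := 3 * (Bf M + M * Kf) + 1.
Definition Bgm (M : R) := M * Bf M.

Lemma cl_range M y : 0 <= M -> 0 <= cl M y <= M.
Proof. intros HM. unfold cl, Rmax, Rmin. destruct (Rle_dec y M); destruct (Rle_dec 0 _); lra. Qed.
Lemma cl_lip M y y' : 0 <= M -> Rabs (cl M y - cl M y') <= Rabs (y - y').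
Proof. intros HM. unfold cl, Rmax, Rmin.
  destruct (Rle_dec y M); destruct (Rle_dec y' M); repeat destruct (Rle_dec 0 _);
  apply Rabs_le; pose proof (Rle_abs (y - y')); pose proof (Rabs_maj2 (y - y')); lra. Qed.
Lemma cl_id M y : 0 <= y <= M -> cl M y = y.
Proof. intros H. unfold cl, Rmax, Rmin. destruct (Rle_dec y M); [|lra]. destruct (Rle_dec 0 y); lra. Qed.
Lemma Nd_clv M x y : 0 <= M -> Nd (clv M x) (clv M y) <= Nd x y.
Proof. intros HM. unfold Nd, clv. pose proof (cl_lip M (x I1) (y I1) HM).
  pose proof (cl_lip M (x I2) (y I2) HM). pose proof (cl_lip M (x I3) (y I3) HM). lra. Qed.

Lemma Bf_pos M : 0 <= M -> 0 < Bf M.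
Proof. intros HM. unfold Bf. pose proof Kf_pos. nra. Qed.

Lemma Gm_bd j M x i : 0 <= M -> Rabs (Gm j M x i) <= Bgm M.
Proof.
  intros HM. unfold Gm, F, Bgm. rewrite Rabs_mult.
  assert (Hu : forall k, Rabs (clv M x k) <= M).
  { intros k. unfold clv. pose proof (cl_range M (x k) HM). rewrite Rabs_pos_eq; lra. }
  pose proof (f_bound (clv M x) j i M Hu). pose proof (Hu i).
  apply Rmult_le_compat; auto using Rabs_pos.
Qed.

Lemma Gm_lip j M x y : 0 <= M -> Nd (Gm j M x) (Gm j M y) <= Lcm M * Nd x y.
Proof.
  intros HM. set (u := clv M x). set (w := clv M y).
  assert (Hu : forall k, Rabs (u k) <= M).
  { intros k. unfold u, clv. pose proof (cl_range M (x k) HM). rewrite Rabs_pos_eq; lra. }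
  assert (Hw : forall k, Rabs (w k) <= M).
  { intros k. unfold w, clv. pose proof (cl_range M (y k) HM). rewrite Rabs_pos_eq; lra. }
  assert (Hi : forall i, Rabs (Gm j M x i - Gm j M y i) <= (Bf M + M * Kf) * Nd u w).
  { intros i. unfold Gm, F. fold u w.
    replace (u i * fv u j i - w i * fv w j i) with ((u i - w i) * fv u j i + w i * (fv u j i - fv w j i)) by ring.
    eapply Rle_trans. apply Rabs_triang. rewrite !Rabs_mult.
    pose proof (f_bound u j i M Hu). pose proof (f_lip u w j i). pose proof (Nd_comp u w i).
    pose proof (Hw i). pose proof (Rabs_pos (u i - w i)). pose proof (Rabs_pos (w i)).
    pose proof (Rabs_pos (fv u j i)). pose proof (Rabs_pos (fv u j i - fv w j i)).
    assert (0 <= Nd u w) by (unfold Nd; pose proof (Rabs_pos (u I1 - w I1)); pose proof (Rabs_pos (u I2 - w I2)); pose proof (Rabs_pos (u I3 - w I3)); lra).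
    pose proof Kf_pos.
    assert (Rabs (u i - w i) * Rabs (fv u j i) <= Nd u w * Bf M) by (apply Rmult_le_compat; lra).
    assert (Rabs (w i) * Rabs (fv u j i - fv w j i) <= M * (Kf * Nd u w)) by (apply Rmult_le_compat; lra).
    nra. }
  pose proof (Nd_clv M x y HM). fold u w in H.
  assert (0 <= Nd u w) by (unfold Nd; pose proof (Rabs_pos (u I1 - w I1)); pose proof (Rabs_pos (u I2 - w I2)); pose proof (Rabs_pos (u I3 - w I3)); lra).
  pose proof (Bf_pos M HM). pose proof Kf_pos.
  unfold Nd at 1. pose proof (Hi I1). pose proof (Hi I2). pose proof (Hi I3). unfold Lcm.
  assert (0 <= M * Kf) by nra.
  nra.
Qed.

Lemma Lcm_pos M : 0 <= M -> 0 < Lcm M.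
Proof. intros HM. unfold Lcm. pose proof (Bf_pos M HM). pose proof Kf_pos. nra. Qed.
Lemma Bgm_pos M : 0 <= M -> 0 <= Bgm M.
Proof. intros HM. unfold Bgm. pose proof (Bf_pos M HM). nra. Qed.

Definition Psi (j : state) (M : R) (v : vec3) : R -> vec3 := Xs (Gm j M) v.

Lemma Psi_0 j M v i : 0 <= M -> Psi j M v 0 i = v i.
Proof. intros HM. unfold Psi. apply (Xs_0 _ (Lcm M) (Bgm M) (Lcm_pos M HM) (Bgm_pos M HM) (fun x y => Gm_lip j M x y HM) (fun x i => Gm_bd j M x i HM)). Qed.
Lemma Psi_cont j M v t i : 0 <= M -> continuous (fun s => Psi j M v s i) t.
Proof. intros HM. unfold Psi. apply (Xs_cont _ (Lcm M) (Bgm M) (Lcm_pos M HM) (Bgm_pos M HM) (fun x y => Gm_lip j M x y HM) (fun x i => Gm_bd j M x i HM)). Qed.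
Lemma Psi_rd j M v t i : 0 <= M -> 0 <= t -> rd (fun s => Psi j M v s i) t (Gm j M (Psi j M v t) i).
Proof. intros HM Ht. unfold Psi. apply (Xs_rd _ (Lcm M) (Bgm M) (Lcm_pos M HM) (Bgm_pos M HM) (fun x y => Gm_lip j M x y HM) (fun x i => Gm_bd j M x i HM)). exact Ht. Qed.


Lemma F_ext j x y i : (forall k, x k = y k) -> F j x i = F j y i.
Proof. intros H. unfold F, fv, fvec. rewrite !H. reflexivity. Qed.

Definition kap := Rmin (Rmin (c1 s1 / e1 s1) (c1 s2 / e1 s2)) (Rmin (c2 s1 / e2 s1) (c2 s2 / e2 s2)).
Lemma kap_pos : 0 < kap.
Proof. unfold kap. pose proof (hc1 s1). pose proof (hc1 s2). pose proof (hc2 s1). pose proof (hc2 s2).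
  pose proof (he1 s1). pose proof (he1 s2). pose proof (he2 s1). pose proof (he2 s2).
  repeat apply Rmin_pos; apply Rdiv_lt_0_compat; auto. Qed.
Lemma kap_e j : kap * e1 j <= c1 j /\ kap * e2 j <= c2 j.
Proof.
  assert (Hd : forall a b k, 0 < b -> k <= a / b -> k * b <= a).
  { intros a b k Hb Hk. apply (Rmult_le_compat_r b) in Hk; [|lra]. 
    replace (a / b * b) with a in Hk by (field; lra). exact Hk. }
  unfold kap. pose proof (Rmin_l (Rmin (c1 s1 / e1 s1) (c1 s2 / e1 s2)) (Rmin (c2 s1 / e2 s1) (c2 s2 / e2 s2))).
  pose proof (Rmin_r (Rmin (c1 s1 / e1 s1) (c1 s2 / e1 s2)) (Rmin (c2 s1 / e2 s1) (c2 s2 / e2 s2))).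
  pose proof (Rmin_l (c1 s1 / e1 s1) (c1 s2 / e1 s2)). pose proof (Rmin_r (c1 s1 / e1 s1) (c1 s2 / e1 s2)).
  pose proof (Rmin_l (c2 s1 / e2 s1) (c2 s2 / e2 s2)). pose proof (Rmin_r (c2 s1 / e2 s1) (c2 s2 / e2 s2)).
  destruct j; split; apply Hd; auto; lra.
Qed.

Definition V (x : vec3) := x I1 + x I2 + kap * x I3.
Definition mm := Rmin 1 d.
Definition CC := (r + 1) ^ 2 / 2.
Definition Lk := CC / mm + 1.
Definition ka1 := Rmin 1 kap.

Lemma mm_pos : 0 < mm. Proof. unfold mm. apply Rmin_pos; lra. Qed.
Lemma ka1_pos : 0 < ka1. Proof. unfold ka1. apply Rmin_pos. lra. apply kap_pos. Qed.
Lemma mm_Lk : mm * Lk = CC + mm. Proof. unfold Lk. pose proof mm_pos. field. lra. Qed.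
Lemma Lk_pos : 0 < Lk. Proof. unfold Lk, CC. pose proof mm_pos. assert (0 <= (r+1)^2/2/mm).
  { apply Rmult_le_pos. apply Rmult_le_pos. apply pow2_ge_0. lra. left; apply Rinv_0_lt_compat; lra. } lra. Qed.

Lemma V_ineq j x : nonneg3 x -> F j x I1 + F j x I2 + kap * F j x I3 <= CC - mm * V x.
Proof.
  intros Hx. pose proof (Hx I1). pose proof (Hx I2). pose proof (Hx I3).
  destruct (kap_e j) as [K1 K2]. pose proof kap_pos.
  assert (Hm1 : mm <= 1) by apply Rmin_l. assert (Hm2 : mm <= d) by apply Rmin_r. pose proof mm_pos.
  unfold F, fv, fvec, V, CC.
  assert (A1 : (c1 j - kap * e1 j) * (x I1 * x I3) >= 0) by (apply Rle_ge; apply Rmult_le_pos; nra).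
  assert (A2 : (c2 j - kap * e2 j) * (x I2 * x I3) >= 0) by (apply Rle_ge; apply Rmult_le_pos; nra).
  assert (A3 : b1 * (x I1 * x I2) >= 0) by (apply Rle_ge; apply Rmult_le_pos; nra).
  assert (A4 : b2 * (x I1 * x I2) >= 0) by (apply Rle_ge; apply Rmult_le_pos; nra).
  assert (A5 : (d - mm) * (kap * x I3) >= 0) by (apply Rle_ge; apply Rmult_le_pos; nra).
  assert (A6 : (1 - mm) * (2 * r + 1 + mm) >= 0) by (apply Rle_ge; apply Rmult_le_pos; nra).
  pose proof (pow2_ge_0 (x I1 - (r + mm) / 2)). pose proof (pow2_ge_0 (x I2 - (r + mm) / 2)).
  nra.
Qed.

Lemma coord_le_V x i : nonneg3 x -> x i <= V x / ka1.
Proof.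
  intros Hx. pose proof (Hx I1). pose proof (Hx I2). pose proof (Hx I3). pose proof kap_pos.
  pose proof ka1_pos. assert (ka1 <= 1) by apply Rmin_l. assert (ka1 <= kap) by apply Rmin_r.
  unfold V. apply (Rmult_le_reg_r ka1); auto. unfold Rdiv. rewrite Rmult_assoc, Rinv_l, Rmult_1_r by lra.
  destruct i; nra.
Qed.

Definition traj (Y DY : R -> vec3) : Prop :=
  (forall t i, 0 < t -> continuous (fun s => Y s i) t) /\ (forall t i, 0 <= t -> rd (fun s => Y s i) t (DY t i)).

Lemma nonneg_gen Y DY i : traj Y DY -> 0 <= Y 0 i ->
  (forall T, 0 <= T -> exists L, 0 <= L /\ forall t, 0 <= t < T -> Y t i < 0 -> - DY t i <= L * (- Y t i)) ->
  forall t, 0 <= t -> 0 <= Y t i.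
Proof.
  intros [Hc Hr] H0 HL t Ht. destruct (HL t Ht) as [L [HL0 HLt]].
  assert (0 - Y t i <= 0); [|lra].
  apply (G1 0 t L 1 (fun s => 0 - Y s i) (fun s => 0 - DY s i)); auto; try lra.
  - intros s Hs. apply cR_minus. apply cR_const. apply Hc. lra.
  - intros s Hs. apply rd_minus. apply rd_const. apply Hr. lra.
  - intros s Hs Hz _. specialize (HLt s Hs ltac:(lra)). lra.
Qed.

Lemma Vstay Y DY t0 L0 : traj Y DY -> 0 <= t0 -> Lk <= L0 -> V (Y t0) <= L0 ->
  (forall t, t0 <= t -> L0 < V (Y t) < L0 + 1 -> DY t I1 + DY t I2 + kap * DY t I3 <= CC - mm * V (Y t)) ->
  forall t, t0 <= t -> V (Y t) <= L0.
Proof.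
  intros [Hc Hr] Ht0 HL0 HV0 HD t Ht.
  assert (V (Y t) - L0 <= 0); [|lra].
  apply (G1 t0 t 0 1 (fun s => V (Y s) - L0) (fun s => DY s I1 + DY s I2 + kap * DY s I3 - 0)); auto; try lra.
  - intros s Hs. unfold V. apply cR_minus; [|apply cR_const]. repeat apply cR_plus; try (apply Hc; lra).
    apply cR_mult. apply cR_const. apply Hc; lra.
  - intros s Hs. unfold V. apply rd_minus; [|apply rd_const]. repeat apply rd_plus; try (apply Hr; lra).
    apply rd_scal. apply Hr; lra.
  - intros s Hs Hz1 Hz2. specialize (HD s ltac:(lra) ltac:(lra)). pose proof mm_Lk. pose proof mm_pos.
    assert (mm * L0 < mm * V (Y s)) by (apply Rmult_lt_compat_l; lra).
    assert (mm * Lk <= mm * L0) by (apply Rmult_le_compat_l; lra). lra.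
Qed.

Definition L0v (v : vec3) := Rmax (V v) Lk.
Definition Mv (v : vec3) := (L0v v + 1) / ka1.
Lemma Mv_pos v : 0 <= Mv v.
Proof. unfold Mv, L0v. pose proof (Rmax_r (V v) Lk). pose proof Lk_pos. pose proof ka1_pos.
  left. apply Rdiv_lt_0_compat; lra. Qed.

Definition Phi (j : state) (v : vec3) : R -> vec3 := Psi j (Mv v) v.

Lemma Phi_traj_clamped j v : traj (Phi j v) (fun t => Gm j (Mv v) (Phi j v t)).
Proof. split; intros t i Ht.
  unfold Phi. apply Psi_cont. apply Mv_pos. unfold Phi. apply Psi_rd. apply Mv_pos. exact Ht. Qed.

Lemma Phi_nonneg j v : nonneg3 v -> forall t, 0 <= t -> nonneg3 (Phi j v t).
Proof.
  intros Hv t Ht i. apply (nonneg_gen (Phi j v) (fun t => Gm j (Mv v) (Phi j v t))); auto.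
  apply Phi_traj_clamped. unfold Phi. rewrite Psi_0. apply Hv. apply Mv_pos.
  intros T HT. exists 0. split. lra. intros s Hs Hneg. unfold Gm, F, clv.
  assert (cl (Mv v) (Phi j v s i) = 0). { unfold cl. apply Rmax_left. pose proof (Rmin_l (Phi j v s i) (Mv v)). lra. }
  rewrite H. lra.
Qed.

Lemma Phi_V j v : nonneg3 v -> forall t, 0 <= t -> V (Phi j v t) <= L0v v.
Proof.
  intros Hv. apply (Vstay (Phi j v) (fun t => Gm j (Mv v) (Phi j v t)) 0 (L0v v)).
  apply Phi_traj_clamped. lra. apply Rmax_r.
  unfold V. unfold Phi. rewrite !Psi_0 by apply Mv_pos. apply Rmax_l.
  intros t Ht HV. pose proof (Phi_nonneg j v Hv t Ht) as Hn.
  assert (E : forall i, Gm j (Mv v) (Phi j v t) i = F j (Phi j v t) i).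
  { intros i. unfold Gm. apply F_ext. intros k. unfold clv. apply cl_id. split. apply Hn.
    pose proof (coord_le_V _ k Hn). unfold Mv. pose proof ka1_pos.
    apply (Rle_trans _ _ _ H). unfold Rdiv. apply Rmult_le_compat_r. left; apply Rinv_0_lt_compat; lra. lra. }
  rewrite !E. apply V_ineq. exact Hn.
Qed.

Lemma Phi_F j v t i : nonneg3 v -> 0 <= t -> Gm j (Mv v) (Phi j v t) i = F j (Phi j v t) i.
Proof.
  intros Hv Ht. pose proof (Phi_nonneg j v Hv t Ht) as Hn. pose proof (Phi_V j v Hv t Ht) as HV.
  unfold Gm. apply F_ext. intros k. unfold clv. apply cl_id. split. apply Hn.
  pose proof (coord_le_V _ k Hn). unfold Mv. pose proof ka1_pos.
  apply (Rle_trans _ _ _ H). unfold Rdiv. apply Rmult_le_compat_r. left; apply Rinv_0_lt_compat; lra. lra.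
Qed.

Lemma Phi_0 j v i : Phi j v 0 i = v i.
Proof. unfold Phi. apply Psi_0. apply Mv_pos. Qed.
Lemma Phi_cont j v t i : continuous (fun s => Phi j v s i) t.
Proof. unfold Phi. apply Psi_cont. apply Mv_pos. Qed.
Lemma Phi_rd j v t i : nonneg3 v -> 0 <= t -> rd (fun s => Phi j v s i) t (F j (Phi j v t) i).
Proof. intros Hv Ht. rewrite <- Phi_F by auto. unfold Phi. apply Psi_rd. apply Mv_pos. exact Ht. Qed.


Definition sol (xi : R -> state) (x0 : vec3) (X : R -> vec3) :=
  solution r d b1 b2 c1 c2 e1 e2 xi x0 X.

Lemma sol_traj xi x0 Y : sol xi x0 Y -> traj Y (fun t i => F (xi t) (Y t) i).
Proof. intros [H0 [Hc Hr]]. split. intros t i Ht. exact (Hc i t Ht). intros t i Ht. exact (Hr i t Ht). Qed.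

Lemma traj_bdd Y DY : traj Y DY -> forall T, 0 <= T ->
  exists M, 0 <= M /\ forall t k, 0 <= t <= T -> Rabs (Y t k) <= M.
Proof.
  intros [Hc Hr] T HT.
  assert (B : forall k, exists M, forall t, 0 <= t <= T -> Rabs (Y t k) <= M).
  { intros k. apply bdd_compact. exact HT. intros t Ht. apply Hc. lra.
    intros t Ht. apply (rd_rcont (fun s => Y s k) t (DY t k)). apply Hr. lra. }
  destruct (B I1) as [M1 H1]. destruct (B I2) as [M2 H2]. destruct (B I3) as [M3 H3].
  exists (Rmax 0 (Rmax M1 (Rmax M2 M3))). split. apply Rmax_l.
  intros t k Ht. pose proof (Rmax_r 0 (Rmax M1 (Rmax M2 M3))).
  pose proof (Rmax_l M1 (Rmax M2 M3)). pose proof (Rmax_r M1 (Rmax M2 M3)).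
  pose proof (Rmax_l M2 M3). pose proof (Rmax_r M2 M3).
  destruct k. specialize (H1 t Ht); lra. specialize (H2 t Ht); lra. specialize (H3 t Ht); lra.
Qed.

Lemma sol_nonneg xi x0 Y : sol xi x0 Y -> nonneg3 x0 -> forall t, 0 <= t -> nonneg3 (Y t).
Proof.
  intros Hs Hx0 t Ht i. pose proof (sol_traj xi x0 Y Hs) as Htr.
  apply (nonneg_gen Y (fun t i => F (xi t) (Y t) i) i Htr); auto.
  { destruct Hs as [H0 _]. rewrite H0. apply Hx0. }
  intros T HT. destruct (traj_bdd _ _ Htr T HT) as [M [HM HB]].
  exists (Bf M). split. left; apply Bf_pos; auto.
  intros s Hs' Hneg. unfold F.
  pose proof (f_bound (Y s) (xi s) i M (fun k => HB s k ltac:(lra))).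
  apply Rabs_le_between in H. nra.
Qed.

Lemma sol_pos xi x0 Y : sol xi x0 Y -> pos3 x0 -> forall t, 0 <= t -> pos3 (Y t).
Proof.
  intros Hs Hx0 t Ht i. pose proof (sol_traj xi x0 Y Hs) as Htr.
  assert (Hnn : nonneg3 x0) by (intros k; left; apply Hx0).
  pose proof (sol_nonneg xi x0 Y Hs Hnn) as Hn.
  destruct (traj_bdd _ _ Htr t Ht) as [M [HM HB]].
  set (L := Bf M). assert (HL : 0 < L) by (apply Bf_pos; auto).
  destruct Htr as [Hc Hr].
  assert (Hz : x0 i * exp (- L * t) - Y t i <= 0).
  { apply (G1 0 t L 1 (fun s => x0 i * exp (- L * s) - Y s i)
          (fun s => x0 i * (- L) * exp (- L * s) - F (xi s) (Y s) i)); auto; try lra.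
    - intros s Hs'. apply cR_minus. apply cR_mult. apply cR_const. apply cR_exp.
      apply cR_mult. apply cR_const. apply cR_id. apply Hc. lra.
    - intros s Hs'. apply rd_minus. apply rd_expo. apply Hr. lra.
    - intros s Hs' Hz _. unfold F.
      pose proof (f_bound (Y s) (xi s) i M (fun k => HB s k ltac:(lra))). fold L in H.
      apply Rabs_le_between in H. pose proof (Hn s ltac:(lra) i).
      pose proof (exp_pos (- L * s)). pose proof (Hx0 i). nra.
    - destruct Hs as [H0 _]. rewrite H0. rewrite Rmult_0_r, exp_0. lra. }
  pose proof (exp_pos (- L * t)). pose proof (Hx0 i). nra.
Qed.

Definition Kset (x : vec3) := nonneg3 x /\ V x <= Lk.

Lemma Kset_compact : compact3 Kset.
Proof.
  split.
  - exists (Lk / ka1). intros x [Hn HV] i. rewrite Rabs_pos_eq by apply Hn.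
    eapply Rle_trans. apply coord_le_V; auto. unfold Rdiv. apply Rmult_le_compat_r.
    left; apply Rinv_0_lt_compat; apply ka1_pos. exact HV.
  - intros x HK. destruct (classic (nonneg3 x)) as [Hn|Hn].
    + assert (HV : Lk < V x). { destruct (Rle_or_lt (V x) Lk); auto. exfalso; apply HK; split; auto. }
      pose proof kap_pos.
      exists ((V x - Lk) / (3 + kap)). split. apply Rdiv_lt_0_compat; lra.
      intros y Hy [_ HVy].
      set (e := (V x - Lk) / (3 + kap)) in *.
      assert (He : e * (3 + kap) = V x - Lk) by (unfold e; field; lra).
      pose proof (Hy I1) as H1. pose proof (Hy I2) as H2. pose proof (Hy I3) as H3.
      apply Rabs_def2 in H1. apply Rabs_def2 in H2. apply Rabs_def2 in H3.
      unfold V in *. nra.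
    + apply not_all_ex_not in Hn. destruct Hn as [i Hi]. apply Rnot_le_lt in Hi.
      exists (- x i). split. lra. intros y Hy [Hny _]. specialize (Hy i). specialize (Hny i).
      apply Rabs_def2 in Hy. lra.
Qed.

Lemma sol_absorb xi x0 Y : sol xi x0 Y -> nonneg3 x0 -> exists T, 0 <= T /\ forall t, T <= t -> Kset (Y t).
Proof.
  intros Hs Hx0. pose proof (sol_traj xi x0 Y Hs) as Htr.
  pose proof (sol_nonneg xi x0 Y Hs Hx0) as Hn.
  assert (HD : forall t, 0 <= t -> F (xi t) (Y t) I1 + F (xi t) (Y t) I2 + kap * F (xi t) (Y t) I3 <= CC - mm * V (Y t)).
  { intros t Ht. apply V_ineq. apply Hn; auto. }
  assert (Stay : forall t0, 0 <= t0 -> V (Y t0) <= Lk -> forall t, t0 <= t -> V (Y t) <= Lk).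
  { intros t0 Ht0 HV0. apply (Vstay Y _ t0 Lk Htr Ht0 (Rle_refl _) HV0).
    intros t Ht _. apply HD. lra. }
  set (T := Rmax 0 ((V (Y 0) - Lk) / mm) + 1).
  assert (HT0 : 0 <= T) by (unfold T; pose proof (Rmax_l 0 ((V (Y 0) - Lk) / mm)); lra).
  assert (HVT : V (Y T) <= Lk).
  { destruct (Rle_or_lt (V (Y T)) Lk) as [|Hgt]; auto. exfalso.
    assert (All : forall s, 0 <= s <= T -> Lk < V (Y s)).
    { intros s Hs'. destruct (Rle_or_lt (V (Y s)) Lk); auto.
      pose proof (Stay s ltac:(lra) H T ltac:(lra)). lra. }
    destruct Htr as [Hc Hr].
    assert (Hz : V (Y T) + mm * T - V (Y 0) <= 0).
    { apply (G1 0 T 0 1 (fun s => V (Y s) + mm * s - V (Y 0))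
            (fun s => F (xi s) (Y s) I1 + F (xi s) (Y s) I2 + kap * F (xi s) (Y s) I3 + mm * 1 - 0)); auto; try lra.
      - intros s Hs'. unfold V. apply cR_minus; [|apply cR_const]. apply cR_plus.
        repeat apply cR_plus; try (apply Hc; lra). apply cR_mult. apply cR_const. apply Hc; lra.
        apply cR_mult. apply cR_const. apply cR_id.
      - intros s Hs'. unfold V. apply rd_minus; [|apply rd_const]. apply rd_plus.
        repeat apply rd_plus; try (apply Hr; lra). apply rd_scal. apply Hr; lra.
        apply rd_scal. apply rd_id.
      - intros s Hs' _ _. pose proof (HD s ltac:(lra)). pose proof (All s ltac:(lra)).
        pose proof mm_Lk. pose proof mm_pos.
        assert (mm * Lk < mm * V (Y s)) by (apply Rmult_lt_compat_l; lra). lra. }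
    pose proof (Rmax_r 0 ((V (Y 0) - Lk) / mm)). pose proof mm_pos.
    assert (mm * ((V (Y 0) - Lk) / mm) = V (Y 0) - Lk) by (field; lra).
    assert (mm * T >= V (Y 0) - Lk + mm). { unfold T. 
      assert (mm * Rmax 0 ((V (Y 0) - Lk) / mm) >= mm * ((V (Y 0) - Lk) / mm)) by (apply Rle_ge; apply Rmult_le_compat_l; lra).
      lra. }
    lra. }
  exists T. split. exact HT0. intros t Ht. split. apply Hn. lra. apply (Stay T HT0 HVT t Ht).
Qed.

Lemma ab_le (a b : R) : Rabs a * Rabs b <= (a * a + b * b) / 2.
Proof. pose proof (pow2_ge_0 (Rabs a - Rabs b)). 
  assert (Rabs a * Rabs a = a * a) by (rewrite <- Rabs_mult; apply Rabs_pos_eq; nra).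
  assert (Rabs b * Rabs b = b * b) by (rewrite <- Rabs_mult; apply Rabs_pos_eq; nra). nra. Qed.

Definition Lu (M : R) := 3 * Bf M + 6 * M * Kf.

Lemma uniq_term j x y M k : 0 <= M -> (forall m, Rabs (x m) <= M) -> (forall m, Rabs (y m) <= M) ->
  (x k - y k) * (F j x k - F j y k) <= (Bf M + 2 * M * Kf) *
     ((x I1 - y I1) * (x I1 - y I1) + (x I2 - y I2) * (x I2 - y I2) + (x I3 - y I3) * (x I3 - y I3)).
Proof.
  intros HM Hx Hy. set (S := (x I1 - y I1) * (x I1 - y I1) + (x I2 - y I2) * (x I2 - y I2) + (x I3 - y I3) * (x I3 - y I3)).
  unfold F. 
  replace ((x k - y k) * (x k * fv x j k - y k * fv y j k)) with
    ((x k - y k) * (x k - y k) * fv x j k + (x k - y k) * y k * (fv x j k - fv y j k)) by ring.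
  pose proof (f_bound x j k M Hx) as Hf. pose proof (f_lip x y j k) as Hl.
  assert (T1 : (x k - y k) * (x k - y k) * fv x j k <= (x k - y k) * (x k - y k) * Bf M).
  { apply Rabs_le_between in Hf. destruct Hf as [_ Hf]. 
    assert (0 <= (x k - y k) * (x k - y k)) by apply Rle_0_sqr.
    apply Rmult_le_compat_l; assumption. }
  assert (T2 : (x k - y k) * y k * (fv x j k - fv y j k) <= Rabs (x k - y k) * (M * (Kf * Nd x y))).
  { eapply Rle_trans. apply Rle_abs. rewrite !Rabs_mult, Rmult_assoc. apply Rmult_le_compat_l. apply Rabs_pos.
    apply Rmult_le_compat; auto using Rabs_pos. }
  assert (Sk : (x k - y k) * (x k - y k) <= S).
  { pose proof (Rle_0_sqr (x I1 - y I1)). pose proof (Rle_0_sqr (x I2 - y I2)). pose proof (Rle_0_sqr (x I3 - y I3)).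
    unfold Rsqr in *. unfold S. destruct k; lra. }
  assert (T3 : Rabs (x k - y k) * Nd x y <= 2 * S).
  { unfold Nd. rewrite !Rmult_plus_distr_l.
    pose proof (ab_le (x k - y k) (x I1 - y I1)). pose proof (ab_le (x k - y k) (x I2 - y I2)).
    pose proof (ab_le (x k - y k) (x I3 - y I3)). unfold S in *. lra. }
  pose proof (Bf_pos M HM). pose proof Kf_pos.
  assert (M * Kf * (Rabs (x k - y k) * Nd x y) <= M * Kf * (2 * S)) by (apply Rmult_le_compat_l; nra).
  assert ((x k - y k) * (x k - y k) * Bf M <= S * Bf M) by (apply Rmult_le_compat_r; lra).
  nra.
Qed.

Lemma sol_unique xi x0 X Y : sol xi x0 X -> sol xi x0 Y -> forall t i, 0 <= t -> Y t i = X t i.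
Proof.
  intros HX HY t i Ht. pose proof (sol_traj _ _ _ HX) as TX. pose proof (sol_traj _ _ _ HY) as TY.
  destruct (traj_bdd _ _ TX t Ht) as [M1 [HM1 B1]]. destruct (traj_bdd _ _ TY t Ht) as [M2 [HM2 B2]].
  set (M := Rmax M1 M2). assert (HM : 0 <= M) by (unfold M; pose proof (Rmax_l M1 M2); lra).
  assert (BX : forall s k, 0 <= s <= t -> Rabs (X s k) <= M) by (intros; eapply Rle_trans; [apply B1; auto| apply Rmax_l]).
  assert (BY : forall s k, 0 <= s <= t -> Rabs (Y s k) <= M) by (intros; eapply Rle_trans; [apply B2; auto| apply Rmax_r]).
  destruct TX as [CX RX]. destruct TY as [CY RY].
  set (z := fun s => (X s I1 - Y s I1) * (X s I1 - Y s I1) + (X s I2 - Y s I2) * (X s I2 - Y s I2) + (X s I3 - Y s I3) * (X s I3 - Y s I3)).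
  assert (Hz : z t <= 0).
  { set (Dk := fun s k => (X s k - Y s k) * (F (xi s) (X s) k - F (xi s) (Y s) k) + (F (xi s) (X s) k - F (xi s) (Y s) k) * (X s k - Y s k)).
    apply (G1 0 t (2 * (3 * (Bf M + 2 * M * Kf))) 1 z (fun s => Dk s I1 + Dk s I2 + Dk s I3)); auto; try lra.
    - pose proof (Bf_pos M HM). pose proof Kf_pos. nra.
    - intros s Hs. unfold z. repeat apply cR_plus; apply cR_mult; apply cR_minus; (apply CX || apply CY); lra.
    - intros s Hs. 
      assert (Hk : forall k, rd (fun s => (X s k - Y s k) * (X s k - Y s k)) s (Dk s k)).
      { intros k. unfold Dk.
        assert (H1 : rd (fun s => X s k - Y s k) s (F (xi s) (X s) k - F (xi s) (Y s) k)).
        { apply (rd_minus (fun s => X s k) (fun s => Y s k)). apply RX; lra. apply RY; lra. }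
        exact (rd_mult (fun s => X s k - Y s k) (fun s => X s k - Y s k) s _ _ H1 H1). }
      unfold z. apply rd_plus. apply rd_plus. apply Hk. apply Hk. apply Hk.
    - intros s Hs _ _. unfold Dk, z.
      pose proof (uniq_term (xi s) (X s) (Y s) M I1 HM (fun k => BX s k ltac:(lra)) (fun k => BY s k ltac:(lra))).
      pose proof (uniq_term (xi s) (X s) (Y s) M I2 HM (fun k => BX s k ltac:(lra)) (fun k => BY s k ltac:(lra))).
      pose proof (uniq_term (xi s) (X s) (Y s) M I3 HM (fun k => BX s k ltac:(lra)) (fun k => BY s k ltac:(lra))).
      lra.
    - unfold z. destruct HX as [HX0 _]. destruct HY as [HY0 _]. rewrite !HX0, !HY0. lra. }
  unfold z in Hz. assert (X t i - Y t i = 0).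
  { pose proof (pow2_ge_0 (X t I1 - Y t I1)). pose proof (pow2_ge_0 (X t I2 - Y t I2)).
    pose proof (pow2_ge_0 (X t I3 - Y t I3)). destruct i; nra. }
  lra.
Qed.

Lemma rd_shift (f : R -> R) c t l : rd f (t - c) l -> rd (fun s => f (s - c)) t l.
Proof.
  intros H. unfold rd. apply (limr_ext (fun h => (f (t - c + h) - f (t - c)) / h)).
  { intros h _. replace (t + h - c) with (t - c + h) by ring. reflexivity. }
  exact H.
Qed.

Lemma cont_shift (f : R -> R) c t : continuous f (t - c) -> continuous (fun s => f (s - c)) t.
Proof.
  intros H. apply (cR_comp (fun s => s - c) f). apply cR_minus. apply cR_id. apply cR_const. exact H.
Qed.

Lemma cont_local (f g : R -> R) t : (exists del, 0 < del /\ forall s, Rabs (s - t) < del -> f s = g s) ->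
  continuous g t -> continuous f t.
Proof.
  intros [del [Hdel He]] Hg. apply cont_eps. intros eps Heps.
  destruct (proj1 (cont_eps g t) Hg eps Heps) as [d0 [Hd0 Hl]].
  exists (Rmin del d0). split. apply Rmin_pos; auto. intros s Hs.
  pose proof (Rmin_l del d0). pose proof (Rmin_r del d0).
  rewrite (He s) by lra. rewrite (He t) by (rewrite Rminus_eq_0, Rabs_R0; lra). apply Hl. lra.
Qed.

Lemma cont_glue (f g1 g2 : R -> R) t del : 0 < del -> g1 t = f t -> g2 t = f t ->
  (forall s, t - del < s < t -> f s = g1 s) -> (forall s, t <= s < t + del -> f s = g2 s) ->
  continuous g1 t -> continuous g2 t -> continuous f t.
Proof.
  intros Hdel E1 E2 H1 H2 C1 C2. apply cont_eps. intros eps Heps.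
  destruct (proj1 (cont_eps g1 t) C1 eps Heps) as [d1 [Hd1 L1]].
  destruct (proj1 (cont_eps g2 t) C2 eps Heps) as [d2 [Hd2 L2]].
  exists (Rmin del (Rmin d1 d2)). split. repeat apply Rmin_pos; auto. intros s Hs.
  pose proof (Rmin_l del (Rmin d1 d2)). pose proof (Rmin_r del (Rmin d1 d2)).
  pose proof (Rmin_l d1 d2). pose proof (Rmin_r d1 d2). apply Rabs_def2 in Hs as Hs'.
  destruct (Rlt_or_le s t).
  - rewrite H1 by lra. rewrite <- E1. apply L1. apply Rabs_def1; lra.
  - rewrite H2 by lra. rewrite <- E2. apply L2. apply Rabs_def1; lra.
Qed.

Section Switch.
Variable xi : R -> state.
Variable tau : nat -> R.
Hypothesis T0 : tau O = 0.
Hypothesis Tinc : forall n, tau n < tau (S n).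
Hypothesis Tunb : forall M, exists n, M < tau n.
Hypothesis Tconst : forall n t, tau n <= t < tau (S n) -> xi t = xi (tau n).
Variable x0 : vec3.
Hypothesis Hx0 : nonneg3 x0.

Lemma tau_le n m : (n <= m)%nat -> tau n <= tau m.
Proof. induction 1. lra. pose proof (Tinc m). lra. Qed.

Lemma tau_ex t : 0 <= t -> exists n, tau n <= t < tau (S n).
Proof.
  intros Ht. destruct (Tunb t) as [k Hk]. revert Hk. induction k; intros Hk.
  - rewrite T0 in Hk. lra.
  - destruct (Rle_or_lt (tau k) t). exists k. lra. apply IHk. exact H.
Qed.

Lemma tau_uniq n m t : tau n <= t < tau (S n) -> tau m <= t < tau (S m) -> n = m.
Proof.
  intros Hn Hm. destruct (Nat.lt_trichotomy n m) as [H|[H|H]]; auto.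
  - pose proof (tau_le (S n) m H). lra.
  - pose proof (tau_le (S m) n H). lra.
Qed.

Definition nidx (t : R) : nat :=
  ClassicalEpsilon.epsilon (inhabits O) (fun n => tau n <= t < tau (S n)).

Lemma nidx_spec t : 0 <= t -> tau (nidx t) <= t < tau (S (nidx t)).
Proof. intros Ht. unfold nidx. apply ClassicalEpsilon.epsilon_spec. apply tau_ex. exact Ht. Qed.

Lemma nidx_eq n t : tau n <= t < tau (S n) -> nidx t = n.
Proof. intros H. assert (0 <= t). { pose proof (tau_le 0 n (Nat.le_0_l n)). lra. }
  apply (tau_uniq _ _ t). apply nidx_spec; auto. exact H. Qed.

Fixpoint wseq (n : nat) : vec3 :=
  match n with
  | O => x0
  | S n => Phi (xi (tau n)) (wseq n) (tau (S n) - tau n)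
  end.

Lemma wseq_nonneg n : nonneg3 (wseq n).
Proof. induction n; simpl. exact Hx0. apply Phi_nonneg. exact IHn. pose proof (Tinc n). lra. Qed.

Definition Xsol (t : R) : vec3 :=
  Phi (xi (tau (nidx t))) (wseq (nidx t)) (t - tau (nidx t)).

Lemma Xsol_on n t : tau n <= t < tau (S n) -> Xsol t = Phi (xi (tau n)) (wseq n) (t - tau n).
Proof. intros H. unfold Xsol. rewrite (nidx_eq n t H). reflexivity. Qed.

Lemma Xsol_sol : sol xi x0 Xsol.
Proof.
  split; [|split].
  - intros i. assert (H : tau 0 <= 0 < tau 1) by (pose proof (Tinc 0); lra).
    rewrite (Xsol_on 0 0 H). simpl. rewrite T0, Rminus_0_r. apply Phi_0.
  - intros i t Ht. pose proof (nidx_spec t ltac:(lra)) as Hn. set (n := nidx t) in *.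
    destruct (Rlt_or_le (tau n) t) as [Hlt|Hle].
    + apply (cont_local _ (fun s => Phi (xi (tau n)) (wseq n) (s - tau n) i)).
      { exists (Rmin (t - tau n) (tau (S n) - t)). split. apply Rmin_pos; lra.
        intros s Hs. pose proof (Rmin_l (t - tau n) (tau (S n) - t)). pose proof (Rmin_r (t - tau n) (tau (S n) - t)).
        apply Rabs_def2 in Hs. rewrite (Xsol_on n s) by lra. reflexivity. }
      apply (cont_shift (fun u => Phi (xi (tau n)) (wseq n) u i)). apply Phi_cont.
    + assert (Htn : t = tau n) by lra.
      destruct n as [|m]. { rewrite T0 in Htn. lra. }
      apply (cont_glue _ (fun s => Phi (xi (tau m)) (wseq m) (s - tau m) i)
                         (fun s => Phi (xi (tau (S m))) (wseq (S m)) (s - tau (S m)) i) t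
                         (Rmin (tau (S m) - tau m) (tau (S (S m)) - tau (S m)))).
      * apply Rmin_pos. pose proof (Tinc m); lra. pose proof (Tinc (S m)); lra.
      * rewrite (Xsol_on (S m) t) by lra. rewrite Htn, Rminus_eq_0, Phi_0. simpl. reflexivity.
      * rewrite (Xsol_on (S m) t) by lra. reflexivity.
      * intros s Hs. pose proof (Rmin_l (tau (S m) - tau m) (tau (S (S m)) - tau (S m))).
        rewrite (Xsol_on m s) by lra. reflexivity.
      * intros s Hs. pose proof (Rmin_r (tau (S m) - tau m) (tau (S (S m)) - tau (S m))).
        rewrite (Xsol_on (S m) s) by lra. reflexivity.
      * apply (cont_shift (fun u => Phi (xi (tau m)) (wseq m) u i)). apply Phi_cont.
      * apply (cont_shift (fun u => Phi (xi (tau (S m))) (wseq (S m)) u i)). apply Phi_cont.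
  - intros i t Ht. pose proof (nidx_spec t Ht) as Hn. set (n := nidx t) in *.
    change (rd (fun s => Xsol s i) t (F (xi t) (Xsol t) i)).
    rewrite (Tconst n t Hn), (Xsol_on n t Hn).
    apply (rd_ext (fun s => Phi (xi (tau n)) (wseq n) (s - tau n) i)).
    { exists (tau (S n) - t). split. lra. intros h Hh. rewrite (Xsol_on n (t + h)) by lra. reflexivity. }
    apply (rd_shift (fun u => Phi (xi (tau n)) (wseq n) u i)). apply Phi_rd. apply wseq_nonneg. lra.
Qed.

End Switch.

Lemma main_sec :
  (forall (x0 : vec3) (xi : R -> state), nonneg3 x0 -> switching_path xi ->
     exists X : R -> vec3, solution r d b1 b2 c1 c2 e1 e2 xi x0 X /\
       forall Y : R -> vec3, solution r d b1 b2 c1 c2 e1 e2 xi x0 Y ->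
         forall t i, 0 <= t -> Y t i = X t i) /\
  (exists K : vec3 -> Prop,
     (forall x, K x -> nonneg3 x) /\ compact3 K /\
     forall (x0 : vec3) (xi : R -> state) (X : R -> vec3),
       nonneg3 x0 -> switching_path xi ->
       solution r d b1 b2 c1 c2 e1 e2 xi x0 X ->
       exists T, 0 <= T /\ forall t, T <= t -> K (X t)) /\
  (forall (x0 : vec3) (xi : R -> state) (X : R -> vec3),
     pos3 x0 -> switching_path xi ->
     solution r d b1 b2 c1 c2 e1 e2 xi x0 X ->
     forall t, 0 <= t -> pos3 (X t)).
Proof.
  split; [|split].
  - intros x0 xi Hx0 [tau [T0 [Tinc [Tunb Tconst]]]].
    exists (Xsol xi tau x0). pose proof (Xsol_sol xi tau T0 Tinc Tunb Tconst x0 Hx0) as HX.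
    split. exact HX. intros Y HY t i Ht. exact (sol_unique xi x0 _ Y HX HY t i Ht).
  - exists Kset. split. intros x [H _]. exact H. split. exact Kset_compact.
    intros x0 xi X Hx0 _ HX. exact (sol_absorb xi x0 X HX Hx0).
  - intros x0 xi X Hx0 _ HX. exact (sol_pos xi x0 X HX Hx0).
Qed.

End Model.

Theorem theorem2p1 (r d b1 b2 : R) (c1 c2 e1 e2 : state -> R)
  (hr : 0 < r) (hd : 0 < d) (hb1 : 0 < b1) (hb2 : 0 < b2)
  (hc1 : forall j, 0 < c1 j) (hc2 : forall j, 0 < c2 j)
  (he1 : forall j, 0 < e1 j) (he2 : forall j, 0 < e2 j) :
  (forall (x0 : vec3) (xi : R -> state), nonneg3 x0 -> switching_path xi ->
     exists X : R -> vec3, solution r d b1 b2 c1 c2 e1 e2 xi x0 X /\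
       forall Y : R -> vec3, solution r d b1 b2 c1 c2 e1 e2 xi x0 Y ->
         forall t i, 0 <= t -> Y t i = X t i) /\
  (exists K : vec3 -> Prop,
     (forall x, K x -> nonneg3 x) /\ compact3 K /\
     forall (x0 : vec3) (xi : R -> state) (X : R -> vec3),
       nonneg3 x0 -> switching_path xi ->
       solution r d b1 b2 c1 c2 e1 e2 xi x0 X ->
       exists T, 0 <= T /\ forall t, T <= t -> K (X t)) /\
  (forall (x0 : vec3) (xi : R -> state) (X : R -> vec3),
     pos3 x0 -> switching_path xi ->
     solution r d b1 b2 c1 c2 e1 e2 xi x0 X ->
     forall t, 0 <= t -> pos3 (X t)).
Proof.
  apply main_sec; assumption.
Qed.
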